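(* Let $\mathcal C\subset\mathbb R^3$ be a non-planar real analytic curve with arc-length parameterization $\gamma:[0,L]\to\mathbb R^3$ and nowhere zero curvature, which has exactly one point $t_0\in[0,L]$ with zero torsion, of order $m\ge1$, i.e. $\tau(t_0)=\dots=\tau^{(m-1)}(t_0)=0$ and $\tau^{(m)}(t_0)\ne0$. For a unit vector $\xi\in S^2$ let $\phi_\xi(t)=\langle\xi,\gamma(t)\rangle$, and for a smooth amplitude $A\in C^\infty[0,L]$ and $\lambda>0$ let $$I(\lambda,\xi)=\int_0^L A(t)e^{i\lambda\phi_\xi(t)}\,dt.$$ Then $$I(\lambda,\xi)\ll_{\mathcal C}\frac{1}{\lambda^{1/(m+3)}}\left(\|A\|_\infty+\|A'\|_1\right),$$ with the implied constant depending only on $\mathcal C$ (uniform in $\xi$).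
   Context: The curvature is $\kappa(t)=\|\gamma''(t)\|$; with $T=\gamma'$, $N=\gamma''/\kappa$ and $B=T\times N$, the torsion $\tau$ is defined by $B'(t)=-\tau(t)N(t)$. *)

(* Defs.v *)
From Stdlib Require Import Reals Lra.
From Coquelicot Require Import Coquelicot.
Open Scope R_scope.

Definition v3 : Type := (R * R * R)%type.
Definition vx (v : v3) : R := fst (fst v).
Definition vy (v : v3) : R := snd (fst v).
Definition vz (v : v3) : R := snd v.
Definition mkv3 (x y z : R) : v3 := (x, y, z).

Definition dot3 (u v : v3) : R := vx u * vx v + vy u * vy v + vz u * vz v.
Definition norm3 (u : v3) : R := sqrt (dot3 u u).
Definition scal3 (a : R) (u : v3) : v3 := mkv3 (a * vx u) (a * vy u) (a * vz u).
Definition cross3 (u v : v3) : v3 :=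
  mkv3 (vy u * vz v - vz u * vy v)
       (vz u * vx v - vx u * vz v)
       (vx u * vy v - vy u * vx v).

Definition D3 (g : R -> v3) (t : R) : v3 :=
  mkv3 (Derive (fun s => vx (g s)) t)
       (Derive (fun s => vy (g s)) t)
       (Derive (fun s => vz (g s)) t).

Definition analytic_at (f : R -> R) (x : R) : Prop :=
  exists (a : nat -> R) (r : R), 0 < r /\
    forall y, Rabs (y - x) < r -> is_pseries a (y - x) (f y).

Definition curve_analytic_at (g : R -> v3) (x : R) : Prop :=
  analytic_at (fun s => vx (g s)) x /\
  analytic_at (fun s => vy (g s)) x /\
  analytic_at (fun s => vz (g s)) x.

(** Frenet frame of an arc-length parametrised curve (context):
    kappa = |gamma''|, T = gamma', N = gamma''/kappa, B = T x N,
    and the torsion tau is the coefficient in B' = - tau N, i.e.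
    tau = - <B', N> (N is a unit vector). *)
Definition tangent (g : R -> v3) (t : R) : v3 := D3 g t.
Definition curvature (g : R -> v3) (t : R) : R := norm3 (D3 (D3 g) t).
Definition normal (g : R -> v3) (t : R) : v3 :=
  scal3 (/ curvature g t) (D3 (D3 g) t).
Definition binormal (g : R -> v3) (t : R) : v3 :=
  cross3 (tangent g t) (normal g t).
Definition torsion (g : R -> v3) (t : R) : R :=
  - dot3 (D3 (binormal g) t) (normal g t).

Definition non_planar (g : R -> v3) (L : R) : Prop :=
  ~ (exists (n : v3) (c : R), n <> mkv3 0 0 0 /\
       forall t, 0 <= t <= L -> dot3 n (g t) = c).

Definition phase (g : R -> v3) (xi : v3) (t : R) : R := dot3 xi (g t).

(** |I(lambda, xi)| where
    I = int_0^L A(t) e^{i lambda phi_xi(t)} dt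
      = int_0^L A cos(lambda phi) + i int_0^L A sin(lambda phi). *)
Definition osc_integral_abs (g : R -> v3) (L : R) (A : R -> R)
    (lam : R) (xi : v3) : R :=
  let re := RInt (fun t => A t * cos (lam * phase g xi t)) 0 L in
  let im := RInt (fun t => A t * sin (lam * phase g xi t)) 0 L in
  sqrt (re ^ 2 + im ^ 2).

Definition smooth (A : R -> R) : Prop :=
  forall (n : nat) (t : R), ex_derive (Derive_n A n) t.

Definition sup_norm (A : R -> R) (a b : R) : R :=
  real (Lub_Rbar (fun y => exists t, a <= t <= b /\ y = Rabs (A t))).

Definition L1_norm_deriv (A : R -> R) (a b : R) : R :=
  RInt (fun t => Rabs (Derive A t)) a b.

(* Main.v *)
Require Import Defs.
From Stdlib Require Import Reals Lra Lia.
From Coquelicot Require Import Coquelicot.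
Open Scope R_scope.

Definition Reg (phi : R -> R) (a b : R) :=
  forall n t, a <= t <= b -> ex_derive (Derive_n phi n) t.

Ltac neq0 := let Hc := fresh in intro Hc;
  repeat match type of Hc with
  | _ * _ = 0 => apply Rmult_integral in Hc; destruct Hc as [Hc|Hc]
  end; try lra.

Lemma exR (f : R -> R) a b : a <= b -> (forall x, a <= x <= b -> continuous f x) -> ex_RInt f a b.
Proof.
  intros Hab H. apply (@ex_RInt_continuous R_CompleteNormedModule). rewrite Rmin_left, Rmax_right by lra. exact H.
Qed.

Lemma Reg_cont phi a b n t : Reg phi a b -> a <= t <= b -> continuous (Derive_n phi n) t.
Proof. intros H Ht. apply (@ex_derive_continuous R_AbsRing R_NormedModule). apply H; auto. Qed.

Lemma exd_cont (f : R -> R) x : ex_derive f x -> continuous f x.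
Proof. apply (@ex_derive_continuous R_AbsRing R_NormedModule). Qed.

Lemma cont_mult (f g : R -> R) x : continuous f x -> continuous g x -> continuous (fun y => f y * g y) x.
Proof. intros; apply (@continuous_mult R_UniformSpace R_AbsRing f g x); auto. Qed.

Lemma RInt_abs_bound (f g : R -> R) a b : a <= b -> ex_RInt f a b -> ex_RInt g a b ->
  (forall x, a <= x <= b -> Rabs (f x) <= g x) -> ex_RInt (fun x => Rabs (f x)) a b ->
  Rabs (RInt f a b) <= RInt g a b.
Proof.
  intros Hab Hf Hg H Ha. eapply Rle_trans. apply abs_RInt_le; auto.
  apply RInt_le; auto. intros; apply H; lra.
Qed.

Lemma vdc_base phi a b mu lam : a <= b -> Reg phi a b -> 0 < mu -> 0 < lam ->
  (forall t, a <= t <= b -> mu <= Derive phi t) ->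
  Rabs (RInt (fun t => cos (lam * phi t)) a b) <=
  2 / (lam * mu) + RInt (fun t => Rabs (Derive (Derive phi) t) / (lam * (Derive phi t) ^ 2)) a b.
Proof.
  intros Hab HR Hmu Hlam Hd.
  assert (E0 : forall t, a <= t <= b -> ex_derive phi t) by (intros; apply (HR 0%nat); auto).
  assert (E1 : forall t, a <= t <= b -> ex_derive (Derive phi) t) by (intros; apply (HR 1%nat); auto).
  assert (E2 : forall t, a <= t <= b -> ex_derive (Derive (Derive phi)) t) by (intros; apply (HR 2%nat); auto).
  assert (Dn : forall t, a <= t <= b -> Derive phi t <> 0) by (intros t Ht; specialize (Hd t Ht); lra).
  set (H := fun x => sin (lam * phi x) / (lam * Derive phi x)).
  set (r := fun x => sin (lam * phi x) * Derive (Derive phi) x / (lam * (Derive phi x) ^ 2)).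
  set (dH := fun x => cos (lam * phi x) - r x).
  assert (HdH : forall x, a <= x <= b -> is_derive H x (dH x)).
  { intros x Hx. specialize (E0 x Hx). specialize (E1 x Hx). specialize (Dn x Hx).
    unfold H, dH, r. auto_derive.
    - repeat split; auto; neq0.
    - rewrite !Derive_ext with (f := fun x => phi x) (g := phi) by reflexivity.
      rewrite Derive_ext with (f := fun x => Derive phi x) (g := Derive phi) by reflexivity.
      field. split; lra. }
  assert (Cr : forall x, a <= x <= b -> continuous r x).
  { intros x Hx. apply exd_cont. specialize (E0 x Hx). specialize (E1 x Hx).
    specialize (E2 x Hx). specialize (Dn x Hx). unfold r. auto_derive.
    repeat split; auto; neq0. }
  assert (CdH : forall x, a <= x <= b -> continuous dH x).
  { intros x Hx. apply exd_cont. specialize (E0 x Hx). specialize (E1 x Hx).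
    specialize (E2 x Hx). specialize (Dn x Hx). unfold dH, r. auto_derive.
    repeat split; auto; neq0. }
  assert (IdH : RInt dH a b = H b - H a).
  { apply is_RInt_unique. apply (is_RInt_derive H dH).
    - rewrite Rmin_left, Rmax_right by lra. auto.
    - rewrite Rmin_left, Rmax_right by lra. auto. }
  assert (Xr : ex_RInt r a b) by (apply exR; auto).
  assert (XdH : ex_RInt dH a b) by (apply exR; auto).
  assert (Ecos : RInt (fun t => cos (lam * phi t)) a b = RInt dH a b + RInt r a b).
  { rewrite <- (RInt_plus dH r) by auto. apply RInt_ext. intros. unfold dH. simpl.
    unfold plus; simpl. ring. }
  rewrite Ecos, IdH.
  assert (BH : forall x, a <= x <= b -> Rabs (H x) <= 1 / (lam * mu)).
  { intros x Hx. unfold H. specialize (Hd x Hx). rewrite Rabs_div.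
    2: { apply Rmult_integral_contrapositive; split; lra. }
    rewrite (Rabs_pos_eq (lam * _)) by nra. unfold Rdiv.
    apply Rmult_le_compat; try apply Rabs_pos.
    - left; apply Rinv_0_lt_compat; nra.
    - apply Rabs_le. split; [apply Rge_le, Rle_ge|]; [pose proof (SIN_bound (lam*phi x)); lra | pose proof (SIN_bound (lam*phi x)); lra].
    - apply Rinv_le_contravar; nra. }
  assert (Br : Rabs (RInt r a b) <= RInt (fun t => Rabs (Derive (Derive phi) t) / (lam * (Derive phi t) ^ 2)) a b).
  { apply RInt_abs_bound; auto.
    - apply exR; auto. intros x Hx. specialize (E0 x Hx). specialize (E1 x Hx).
      specialize (Dn x Hx). specialize (E2 x Hx). unfold Rdiv. apply cont_mult.
      apply continuous_Rabs_comp, exd_cont; auto.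
      apply exd_cont. auto_derive. repeat split; auto; neq0.
    - intros x Hx. unfold r. specialize (Dn x Hx).
      assert (0 < lam * Derive phi x ^ 2) by (apply Rmult_lt_0_compat; auto; apply pow2_gt_0 ; auto).
      rewrite Rabs_div by lra. rewrite (Rabs_pos_eq (lam * _)) by lra.
      apply Rmult_le_compat_r. left; apply Rinv_0_lt_compat; auto.
      rewrite Rabs_mult. pose proof (Rabs_pos (Derive (Derive phi) x)).
      assert (Rabs (sin (lam * phi x)) <= 1) by (apply Rabs_le; apply SIN_bound).
      nra.
    - apply exR; auto. intros x Hx. apply continuous_Rabs_comp; auto. }
  pose proof (BH a (conj (Rle_refl a) Hab)). pose proof (BH b (conj Hab (Rle_refl b))).
  pose proof (Rabs_triang (H b - H a) (RInt r a b)).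
  pose proof (Rabs_triang (H b) (- H a)). rewrite Rabs_Ropp in H3.
  unfold Rminus in *. lra.
Qed.

Lemma cpt (f : R -> R) x : continuous f x -> continuity_pt f x.
Proof. intros; apply continuity_pt_filterlim; auto. Qed.

Lemma Reg_sub phi a b a' b' : Reg phi a b -> a <= a' -> b' <= b -> Reg phi a' b'.
Proof. intros H ? ? n t Ht; apply H; lra. Qed.

Lemma Reg_opp phi a b : Reg phi a b -> Reg (fun t => - phi t) a b.
Proof.
  intros H n t Ht. apply ex_derive_ext with (f := fun t => - Derive_n phi n t).
  intros; rewrite Derive_n_opp; auto.
  apply (@ex_derive_opp R_AbsRing R_NormedModule (Derive_n phi n)). apply H; auto.
Qed.

Lemma Derive_n_shift phi c n t : Derive_n (fun x => phi x + c) (S n) t = Derive_n phi (S n) t.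
Proof.
  revert t; induction n; intros t.
  - simpl. unfold Derive. apply f_equal. apply Lim_ext. intros y. f_equal. ring.
  - simpl. apply Derive_ext. intros; apply IHn.
Qed.

Lemma Reg_shift phi c a b : Reg phi a b -> Reg (fun x => phi x + c) a b.
Proof.
  intros H n t Ht. destruct n.
  - simpl. apply (@ex_derive_plus R_AbsRing R_NormedModule phi (fun _ => c)).
    apply (H 0%nat); auto. apply ex_derive_const.
  - apply ex_derive_ext with (f := Derive_n phi (S n)). intros; rewrite Derive_n_shift; auto.
    apply H; auto.
Qed.

Lemma mvt_lem phi n a b x y : Reg phi a b -> a <= x -> x <= y -> y <= b ->
  exists c, x <= c <= y /\ Derive_n phi n y - Derive_n phi n x = Derive_n phi (S n) c * (y - x).
Proof.
  intros HR H1 H2 H3.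
  destruct (MVT_gen (Derive_n phi n) x y (Derive_n phi (S n))) as [c [Hc E]].
  - intros z Hz. rewrite Rmin_left, Rmax_right in Hz by lra. simpl.
    apply Derive_correct. apply HR. lra.
  - intros z Hz. rewrite Rmin_left, Rmax_right in Hz by lra. apply cpt, Reg_cont with a b; auto; lra.
  - rewrite Rmin_left, Rmax_right in Hc by lra. exists c; split; auto.
Qed.

Lemma mono_lem phi n a b mu x y : Reg phi a b ->
  (forall t, a <= t <= b -> mu <= Derive_n phi (S n) t) -> a <= x -> x <= y -> y <= b ->
  mu * (y - x) <= Derive_n phi n y - Derive_n phi n x.
Proof.
  intros HR Hm H1 H2 H3. destruct (mvt_lem phi n a b x y) as [c [Hc E]]; auto.
  rewrite E. apply Rmult_le_compat_r; [lra|]. apply Hm; lra.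
Qed.

Lemma lip_lem phi n a b K x y : Reg phi a b ->
  (forall t, a <= t <= b -> Rabs (Derive_n phi (S n) t) <= K) -> a <= x -> x <= y -> y <= b ->
  Rabs (Derive_n phi n y - Derive_n phi n x) <= K * (y - x).
Proof.
  intros HR Hm H1 H2 H3. destruct (mvt_lem phi n a b x y) as [c [Hc E]]; auto.
  rewrite E, Rabs_mult, (Rabs_pos_eq (y - x)) by lra. apply Rmult_le_compat_r; [lra|]. apply Hm; lra.
Qed.

Definition cosI phi lam a b := RInt (fun t => cos (lam * phi t)) a b.

Lemma cosI_opp phi lam a b : cosI (fun t => - phi t) lam a b = cosI phi lam a b.
Proof. unfold cosI. apply RInt_ext. intros. rewrite <- cos_neg. f_equal. ring. Qed.

Lemma Reg_exR phi lam a b : a <= b -> Reg phi a b -> ex_RInt (fun t => cos (lam * phi t)) a b.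
Proof.
  intros Hab HR. apply exR; auto. intros x Hx. apply exd_cont.
  assert (ex_derive phi x) by (apply (HR 0%nat); auto). auto_derive. auto.
Qed.

Lemma vdc1_mono phi a b mu lam : a <= b -> Reg phi a b -> 0 < mu -> 0 < lam ->
  (forall t, a <= t <= b -> mu <= Derive phi t) ->
  ((forall t, a <= t <= b -> 0 <= Derive (Derive phi) t) \/ (forall t, a <= t <= b -> Derive (Derive phi) t <= 0)) ->
  Rabs (cosI phi lam a b) <= 3 / (lam * mu).
Proof.
  intros Hab HR Hmu Hlam Hd Hs. eapply Rle_trans. apply (vdc_base phi a b mu lam); auto.
  assert (E1 : forall t, a <= t <= b -> ex_derive (Derive phi) t) by (intros; apply (HR 1%nat); auto).
  assert (Dp : forall t, a <= t <= b -> 0 < Derive phi t) by (intros t Ht; specialize (Hd t Ht); lra).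
  assert (Ia : 1 / (lam * Derive phi a) <= 1 / (lam * mu)).
  { unfold Rdiv; rewrite !Rmult_1_l. apply Rinv_le_contravar; [nra|]. apply Rmult_le_compat_l; [lra|]. apply Hd; lra. }
  assert (Ib : 1 / (lam * Derive phi b) <= 1 / (lam * mu)).
  { unfold Rdiv; rewrite !Rmult_1_l. apply Rinv_le_contravar; [nra|]. apply Rmult_le_compat_l; [lra|]. apply Hd; lra. }
  assert (Pa : 0 < 1 / (lam * Derive phi a)) by (apply Rdiv_lt_0_compat; [lra|]; apply Rmult_lt_0_compat; auto; apply Dp; lra).
  assert (Pb : 0 < 1 / (lam * Derive phi b)) by (apply Rdiv_lt_0_compat; [lra|]; apply Rmult_lt_0_compat; auto; apply Dp; lra).
  destruct Hs as [Hs|Hs].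
  - rewrite (@is_RInt_unique R_CompleteNormedModule _ a b (- (1 / (lam * Derive phi b))  - - (1 / (lam * Derive phi a)))).
    lra.
    apply (is_RInt_ext (fun t => Derive (Derive phi) t / (lam * Derive phi t ^ 2))).
    { rewrite Rmin_left, Rmax_right by lra. intros x Hx. rewrite Rabs_pos_eq; auto. apply Hs; lra. }
    apply (is_RInt_derive (fun t => - (1 / (lam * Derive phi t)))).
    + rewrite Rmin_left, Rmax_right by lra. intros x Hx. specialize (Dp x Hx). specialize (E1 x Hx).
      auto_derive. repeat split; auto; neq0. change (fun x0 : R => Derive phi x0) with (Derive phi). field. lra.
    + rewrite Rmin_left, Rmax_right by lra. intros x Hx. apply exd_cont.
      specialize (Dp x Hx). specialize (E1 x Hx).
      assert (ex_derive (Derive (Derive phi)) x) by (apply (HR 2%nat); auto).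
      auto_derive. repeat split; auto; neq0.
  - rewrite (@is_RInt_unique R_CompleteNormedModule _ a b ((1 / (lam * Derive phi b))  - (1 / (lam * Derive phi a)))).
    lra.
    apply (is_RInt_ext (fun t => - (Derive (Derive phi) t / (lam * Derive phi t ^ 2)))).
    { rewrite Rmin_left, Rmax_right by lra. intros x Hx. rewrite Rabs_left1 by (apply Hs; lra).
      exact (eq_sym (Ropp_div _ _)). }
    apply (is_RInt_derive (fun t => (1 / (lam * Derive phi t)))).
    + rewrite Rmin_left, Rmax_right by lra. intros x Hx. specialize (Dp x Hx). specialize (E1 x Hx).
      auto_derive. repeat split; auto; neq0. change (fun x0 : R => Derive phi x0) with (Derive phi). field. lra.
    + rewrite Rmin_left, Rmax_right by lra. intros x Hx. apply exd_cont.
      specialize (Dp x Hx). specialize (E1 x Hx).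
      assert (ex_derive (Derive (Derive phi)) x) by (apply (HR 2%nat); auto).
      auto_derive. repeat split; auto; neq0.
Qed.

Lemma vdc1_bnd phi a b mu lam K : a <= b -> Reg phi a b -> 0 < mu -> 0 < lam ->
  (forall t, a <= t <= b -> mu <= Derive phi t) ->
  (forall t, a <= t <= b -> Rabs (Derive (Derive phi) t) <= K) ->
  Rabs (cosI phi lam a b) <= 2 / (lam * mu) + (b - a) * K / (lam * mu ^ 2).
Proof.
  intros Hab HR Hmu Hlam Hd HK. eapply Rle_trans. apply (vdc_base phi a b mu lam); auto.
  apply Rplus_le_compat_l.
  assert (E1 : forall t, a <= t <= b -> ex_derive (Derive phi) t) by (intros; apply (HR 1%nat); auto).
  assert (Dp : forall t, a <= t <= b -> 0 < Derive phi t) by (intros t Ht; specialize (Hd t Ht); lra).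
  replace ((b - a) * K / (lam * mu ^ 2)) with (RInt (fun _ => K / (lam * mu ^ 2)) a b).
  2: { rewrite RInt_const. simpl. unfold scal; simpl; unfold mult; simpl. field. lra. }
  apply RInt_le; auto.
  - apply exR; auto. intros x Hx. specialize (Dp x Hx). specialize (E1 x Hx).
    assert (ex_derive (Derive (Derive phi)) x) by (apply (HR 2%nat); auto).
    unfold Rdiv. apply cont_mult. apply continuous_Rabs_comp, exd_cont; auto.
    apply exd_cont. auto_derive. repeat split; auto; neq0.
  - apply ex_RInt_const.
  - intros x Hx. assert (Hx' : a <= x <= b) by lra. specialize (Dp x Hx'). specialize (Hd x Hx').
    specialize (HK x Hx'). unfold Rdiv. apply Rmult_le_compat; auto.
    apply Rabs_pos. left; apply Rinv_0_lt_compat; apply Rmult_lt_0_compat; auto; apply pow_lt; auto.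
    apply Rinv_le_contravar. apply Rmult_lt_0_compat; auto; apply pow_lt; auto.
    apply Rmult_le_compat_l; [lra|]. simpl. nra.
Qed.

Definition VDp (j : nat) := forall phi a b mu lam s, a <= b -> Reg phi a b -> 0 < mu -> 0 < lam -> 0 < s ->
  1 <= lam * mu * s ^ (S j) ->
  (forall t, a <= t <= b -> mu <= Derive_n phi (S j) t) ->
  (j = 0%nat -> (forall t, a <= t <= b -> 0 <= Derive_n phi 2 t) \/ (forall t, a <= t <= b -> Derive_n phi 2 t <= 0)) ->
  Rabs (cosI phi lam a b) <= 4 ^ (S j) * s.

Definition VD (j : nat) := forall phi a b mu lam s, a <= b -> Reg phi a b -> 0 < mu -> 0 < lam -> 0 < s ->
  1 <= lam * mu * s ^ (S j) ->
  ((forall t, a <= t <= b -> mu <= Derive_n phi (S j) t) \/ (forall t, a <= t <= b -> Derive_n phi (S j) t <= - mu)) ->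
  (j = 0%nat -> (forall t, a <= t <= b -> 0 <= Derive_n phi 2 t) \/ (forall t, a <= t <= b -> Derive_n phi 2 t <= 0)) ->
  Rabs (cosI phi lam a b) <= 4 ^ (S j) * s.

Lemma VD_of_pos j : VDp j -> VD j.
Proof.
  intros HP phi a b mu lam s Hab HR Hmu Hlam Hs Hk [Hd|Hd] Hsg.
  - apply (HP phi a b mu lam s); auto.
  - rewrite <- cosI_opp. apply (HP (fun t => - phi t) a b mu lam s); auto. apply Reg_opp; auto.
    intros t Ht. rewrite Derive_n_opp. specialize (Hd t Ht); lra.
    intros Hj. destruct (Hsg Hj) as [H|H]; [right|left]; intros t Ht; rewrite Derive_n_opp; specialize (H t Ht); lra.
Qed.

Lemma VD0 : VD 0.
Proof.
  apply VD_of_pos. intros phi a b mu lam s Hab HR Hmu Hlam Hs Hk Hd Hsg.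
  eapply Rle_trans. apply (vdc1_mono phi a b mu lam); auto.
  simpl in Hk |- *. rewrite Rmult_1_r in Hk.
  assert (1 / (lam * mu) <= s).
  { unfold Rdiv. rewrite Rmult_1_l. rewrite <- (Rmult_1_l s). rewrite <- (Rinv_l (lam*mu)) by nra.
    rewrite Rmult_assoc. rewrite <- (Rmult_1_r (/ (lam * mu))) at 1. apply Rmult_le_compat_l.
    left; apply Rinv_0_lt_compat; nra. lra. }
  unfold Rdiv in *. lra.
Qed.

Lemma cosI_chasles phi lam a b c : a <= b -> b <= c -> Reg phi a c ->
  cosI phi lam a c = cosI phi lam a b + cosI phi lam b c.
Proof.
  intros H1 H2 HR. unfold cosI. symmetry.
  apply (@RInt_Chasles R_CompleteNormedModule); apply Reg_exR; auto; eapply Reg_sub; eauto; lra.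
Qed.

Lemma cosI_triv phi lam a b : a <= b -> Reg phi a b -> Rabs (cosI phi lam a b) <= b - a.
Proof.
  intros Hab HR. unfold cosI. rewrite <- (Rmult_1_r (b - a)). apply abs_RInt_le_const; auto.
  apply Reg_exR; auto. intros; apply Rabs_le; apply COS_bound.
Qed.

Lemma cosI_point phi lam a : cosI phi lam a a = 0.
Proof. unfold cosI. rewrite RInt_point. reflexivity. Qed.

Lemma VD_step j : VD j -> VDp (S j).
Proof.
  intros IH phi a b mu lam s Hab HR Hmu Hlam Hs Hk Hd _.
  set (g := Derive_n phi (S j)).
  set (eps := mu * s).
  assert (Heps : 0 < eps) by (unfold eps; nra).
  assert (P4 : 1 <= 4 ^ (S j)) by (apply pow_R1_Rle; lra).
  assert (E4 : 4 ^ (S (S j)) = 4 * 4 ^ (S j)) by (simpl; ring).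
  assert (mono : forall x y, a <= x -> x <= y -> y <= b -> mu * (y - x) <= g y - g x).
  { intros x y H1 H2 H3. apply (mono_lem phi (S j) a b mu x y); auto. }
  assert (help : forall a' b', a <= a' -> a' <= b' -> b' <= b ->
     (forall t, a' <= t <= b' -> g t <= - eps) \/ (forall t, a' <= t <= b' -> eps <= g t) ->
     Rabs (cosI phi lam a' b') <= 4 ^ (S j) * s).
  { intros a' b' H1 H2 H3 Hg. apply (IH phi a' b' eps lam s); auto.
    - eapply Reg_sub; eauto.
    - unfold eps. replace (lam * (mu * s) * s ^ S j) with (lam * mu * s ^ S (S j)) by (simpl; ring). auto.
    - destruct Hg as [Hg|Hg]; [right|left]; auto.
    - intros ->. left. intros t Ht. specialize (Hd t ltac:(lra)). simpl in Hd |- *. lra. }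
  destruct (Rle_lt_dec (g b) (- eps)) as [Hb|Hb].
  { eapply Rle_trans. apply help; auto; try lra. left. intros t Ht.
    pose proof (mono t b ltac:(lra) ltac:(lra) ltac:(lra)). nra.
    rewrite E4. nra. }
  destruct (Rle_lt_dec eps (g a)) as [Ha|Ha].
  { eapply Rle_trans. apply help; auto; try lra. right. intros t Ht.
    pose proof (mono a t ltac:(lra) ltac:(lra) ltac:(lra)). nra.
    rewrite E4. nra. }
  assert (Cg : forall t, a <= t <= b -> continuity_pt g t).
  { intros t Ht. apply cpt. unfold g. apply Reg_cont with a b; auto. }
  assert (Hlo : exists lo, a <= lo <= b /\ - eps <= g lo /\ (lo = a \/ g lo = - eps)).
  { destruct (Rle_lt_dec (- eps) (g a)) as [H|H].
    - exists a. repeat split; auto; lra.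
    - assert (a < b). { destruct (Req_dec a b) as [->|]; [lra|lra]. }
      destruct (Ranalysis5.IVT_interv (fun t => g t + eps) a b) as [z [Hz Ez]]; auto.
      + intros t Ht. apply continuity_pt_plus; auto. apply continuity_pt_const. intros ??; auto.
      + lra.
      + lra.
      + exists z. repeat split; try lra. }
  assert (Hhi : exists hi, a <= hi <= b /\ g hi <= eps /\ (hi = b \/ g hi = eps)).
  { destruct (Rle_lt_dec (g b) eps) as [H|H].
    - exists b. repeat split; auto; lra.
    - assert (a < b). { destruct (Req_dec a b) as [->|]; [lra|lra]. }
      destruct (Ranalysis5.IVT_interv (fun t => g t - eps) a b) as [z [Hz Ez]]; auto.
      + intros t Ht. apply continuity_pt_minus; auto. apply continuity_pt_const. intros ??; auto.
      + lra.
      + lra.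
      + exists z. repeat split; try lra. }
  destruct Hlo as [lo [Hl1 [Hl2 Hl3]]]. destruct Hhi as [hi [Hh1 [Hh2 Hh3]]].
  assert (Hlh : lo <= hi).
  { destruct (Rle_lt_dec lo hi) as [H|H]; auto.
    pose proof (mono hi lo ltac:(lra) ltac:(lra) ltac:(lra)).
    destruct Hl3 as [->|Hl3]; [lra|]. destruct Hh3 as [->|Hh3]; [lra|]. nra. }
  assert (Hlen : hi - lo <= 2 * s).
  { pose proof (mono lo hi ltac:(lra) ltac:(lra) ltac:(lra)). unfold eps in *.
    assert (mu * (hi - lo) <= mu * (2 * s)) by lra. nra. }
  rewrite (cosI_chasles phi lam a lo b) by (first [lra | auto]).
  rewrite (cosI_chasles phi lam lo hi b) by (first [lra | eapply Reg_sub; eauto; lra]).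
  assert (I1 : Rabs (cosI phi lam a lo) <= 4 ^ (S j) * s).
  { destruct Hl3 as [->|Hl3]. rewrite cosI_point, Rabs_R0. nra.
    apply help; try lra. left. intros t Ht. pose proof (mono t lo ltac:(lra) ltac:(lra) ltac:(lra)). nra. }
  assert (I3 : Rabs (cosI phi lam hi b) <= 4 ^ (S j) * s).
  { destruct Hh3 as [->|Hh3]. rewrite cosI_point, Rabs_R0. nra.
    apply help; try lra. right. intros t Ht. pose proof (mono hi t ltac:(lra) ltac:(lra) ltac:(lra)). nra. }
  assert (I2 : Rabs (cosI phi lam lo hi) <= hi - lo) by (apply cosI_triv; auto; eapply Reg_sub; eauto; lra).
  pose proof (Rabs_triang (cosI phi lam a lo) (cosI phi lam lo hi + cosI phi lam hi b)).
  pose proof (Rabs_triang (cosI phi lam lo hi) (cosI phi lam hi b)).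
  rewrite E4. nra.
Qed.

Lemma VD_all j : VD j.
Proof. induction j. apply VD0. apply VD_of_pos, VD_step; auto. Qed.

Lemma sup_norm_ge (A : R -> R) L t : smooth A -> 0 <= L -> 0 <= t <= L -> Rabs (A t) <= sup_norm A 0 L.
Proof.
  intros HA HL Ht.
  destruct (continuity_ab_maj (fun t => Rabs (A t)) 0 L HL) as [Mx [HM _]].
  { intros c Hc. apply cpt. apply continuous_Rabs_comp. apply exd_cont. apply (HA 0%nat). }
  unfold sup_norm. destruct (Lub_Rbar_correct (fun y => exists t, 0 <= t <= L /\ y = Rabs (A t))) as [Hub Hl].
  assert (H1 : Rbar_le (Rabs (A t)) (Lub_Rbar (fun y => exists t, 0 <= t <= L /\ y = Rabs (A t)))).
  { apply Hub. exists t; auto. }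
  assert (H2 : Rbar_le (Lub_Rbar (fun y => exists t, 0 <= t <= L /\ y = Rabs (A t))) (Rabs (A Mx))).
  { apply Hl. intros y [u [Hu ->]]. simpl. apply HM; auto. }
  destruct (Lub_Rbar _); simpl in *; auto; contradiction.
Qed.

Lemma sup_norm_nonneg (A : R -> R) L : smooth A -> 0 <= L -> 0 <= sup_norm A 0 L.
Proof. intros. eapply Rle_trans; [apply Rabs_pos|]. apply (sup_norm_ge A L 0); auto; lra. Qed.

Lemma L1_nonneg (A : R -> R) L : smooth A -> 0 <= L -> 0 <= L1_norm_deriv A 0 L.
Proof.
  intros HA HL. unfold L1_norm_deriv. apply RInt_ge_0; auto.
  apply exR; auto. intros x Hx. apply continuous_Rabs_comp, exd_cont. apply (HA 1%nat).
  intros; apply Rabs_pos.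
Qed.

Lemma cont_plus (f g : R -> R) x : continuous f x -> continuous g x -> continuous (fun y => f y + g y) x.
Proof. intros; apply (@continuous_plus R_UniformSpace R_AbsRing R_NormedModule f g x); auto. Qed.

Lemma RInt_mulc (f : R -> R) a b M : ex_RInt f a b -> RInt (fun t => f t * M) a b = RInt f a b * M.
Proof.
  intros H. pose proof (@RInt_scal R_CompleteNormedModule f a b M H) as E.
  unfold scal in E; simpl in E; unfold mult in E; simpl in E.
  rewrite Rmult_comm, <- E. apply RInt_ext. intros; apply Rmult_comm.
Qed.

Lemma ampl phi lam L a0 b0 A M : 0 < L -> a0 < 0 -> L < b0 -> Reg phi a0 b0 -> smooth A ->
  (forall x, 0 <= x <= L -> Rabs (cosI phi lam 0 x) <= M) ->
  Rabs (RInt (fun t => A t * cos (lam * phi t)) 0 L) <= M * (sup_norm A 0 L + L1_norm_deriv A 0 L).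
Proof.
  intros HL Ha0 Hb0 HR HA HM.
  set (c := fun t => cos (lam * phi t)).
  set (F := fun x => cosI phi lam 0 x).
  assert (HM0 : 0 <= M) by (specialize (HM 0 ltac:(lra)); unfold cosI in HM; rewrite RInt_point in HM;
     eapply Rle_trans; [apply Rabs_pos|]; apply HM).
  assert (Cc : forall x, a0 <= x <= b0 -> continuous c x).
  { intros x Hx. apply exd_cont. assert (ex_derive phi x) by (apply (HR 0%nat); auto). unfold c. auto_derive; auto. }
  assert (XI : forall u v, a0 <= u <= b0 -> a0 <= v <= b0 -> ex_RInt c u v).
  { intros u v Hu Hv. destruct (Rle_dec u v).
    - apply exR; auto. intros; apply Cc; lra.
    - apply ex_RInt_swap. apply exR; try lra. intros; apply Cc; lra. }
  assert (DF : forall x, 0 <= x <= L -> is_derive F x (c x)).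
  { intros x Hx. apply (@is_derive_RInt R_CompleteNormedModule c F 0 x).
    - exists (mkposreal (Rmin (x - a0) (b0 - x)) ltac:(apply Rmin_pos; lra)).
      intros y Hy. unfold F, cosI. apply (@RInt_correct R_CompleteNormedModule).
      apply XI; try lra. cbn in Hy. unfold AbsRing_ball, abs, minus, plus, opp in Hy; simpl in Hy.
      apply Rabs_lt_between' in Hy. pose proof (Rmin_l (x - a0) (b0 - x)). pose proof (Rmin_r (x - a0) (b0 - x)). lra.
    - apply Cc; lra. }
  assert (CF : forall x, 0 <= x <= L -> continuous F x).
  { intros x Hx. apply exd_cont. eexists. apply DF; auto. }
  assert (CdA : forall x, continuous (Derive A) x) by (intros; apply exd_cont; apply (HA 1%nat)).
  assert (Xp : ex_RInt (fun t => Derive A t * F t) 0 L).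
  { apply exR; try lra. intros; apply cont_mult; auto. }
  assert (Xq : ex_RInt (fun t => A t * c t) 0 L).
  { apply exR; try lra. intros; apply cont_mult; auto. apply exd_cont, (HA 0%nat). apply Cc; lra. }
  assert (IBP : RInt (fun t => Derive A t * F t) 0 L + RInt (fun t => A t * c t) 0 L = A L * F L - A 0 * F 0).
  { rewrite <- (@RInt_plus R_CompleteNormedModule) by auto.
    apply is_RInt_unique. apply (@is_RInt_derive R_CompleteNormedModule (fun t => A t * F t)).
    - rewrite Rmin_left, Rmax_right by lra. intros x Hx.
      apply (@is_derive_mult R_AbsRing). apply Derive_correct, (HA 0%nat). apply DF; auto.
      intros; apply Rmult_comm.
    - rewrite Rmin_left, Rmax_right by lra. intros x Hx. apply cont_plus.
      apply cont_mult; auto. apply cont_mult; auto. apply exd_cont, (HA 0%nat). apply Cc; lra. }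
  assert (F0 : F 0 = 0) by (unfold F, cosI; rewrite RInt_point; reflexivity).
  rewrite F0, Rmult_0_r, Rminus_0_r in IBP.
  change (RInt (fun t => A t * cos (lam * phi t)) 0 L) with (RInt (fun t => A t * c t) 0 L).
  replace (RInt (fun t => A t * c t) 0 L) with (A L * F L - RInt (fun t => Derive A t * F t) 0 L) by lra.
  assert (B1 : Rabs (A L * F L) <= sup_norm A 0 L * M).
  { rewrite Rabs_mult. apply Rmult_le_compat; try apply Rabs_pos. apply sup_norm_ge; auto; lra. apply HM; lra. }
  assert (B2 : Rabs (RInt (fun t => Derive A t * F t) 0 L) <= L1_norm_deriv A 0 L * M).
  { unfold L1_norm_deriv. rewrite <- RInt_mulc.
    2: { apply exR; try lra. intros; apply continuous_Rabs_comp; auto. }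
    apply RInt_abs_bound; try lra; auto.
    - apply exR; try lra. intros; apply cont_mult; auto. apply continuous_Rabs_comp; auto.
      apply continuous_const.
    - intros x Hx. rewrite Rabs_mult. apply Rmult_le_compat_l. apply Rabs_pos. apply HM; auto.
    - apply exR; try lra. intros; apply continuous_Rabs_comp; auto. apply cont_mult; auto. }
  pose proof (Rabs_triang (A L * F L) (- RInt (fun t => Derive A t * F t) 0 L)). rewrite Rabs_Ropp in H.
  unfold Rminus. nra.
Qed.

Lemma X_pos lam y : 0 < Rpower lam y.
Proof. unfold Rpower. apply exp_pos. Qed.

Lemma X_ge1 lam K : 0 < lam < 1 -> (1 <= K)%nat -> 1 <= Rpower lam (- / INR K).
Proof.
  intros Hl HK. unfold Rpower. rewrite <- exp_0. left; apply exp_increasing.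
  assert (ln lam < 0) by (rewrite <- ln_1; apply ln_increasing; lra).
  assert (0 < / INR K) by (apply Rinv_0_lt_compat, lt_0_INR; lia).
  nra.
Qed.

Lemma inv_le_X lam K : 1 <= lam -> (1 <= K)%nat -> / lam <= Rpower lam (- / INR K).
Proof.
  intros Hl HK. rewrite <- (Rpower_1 lam) at 1 by lra. rewrite <- Rpower_Ropp.
  apply Rle_Rpower; auto. assert (1 <= INR K) by (replace 1 with (INR 1) by reflexivity; apply le_INR; auto).
  assert (/ INR K <= 1). { rewrite <- Rinv_1. apply Rinv_le_contravar; lra. } lra.
Qed.

Lemma pow_le1' x n : 0 <= x <= 1 -> x ^ n <= 1.
Proof. intros H. induction n; simpl; [lra|]. assert (0 <= x ^ n) by (apply pow_le; lra). nra. Qed.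

Lemma pow_bound lam K k mu mu0 : 1 <= lam -> (1 <= k)%nat -> (k <= K)%nat -> 0 < mu0 -> mu0 <= mu -> mu0 <= 1 ->
  1 <= lam * mu * (Rpower lam (- / INR K) / mu0) ^ k.
Proof.
  intros Hl Hk HkK H0 H1 H2. set (X := Rpower lam (- / INR K)).
  assert (HX : 0 < X) by apply X_pos.
  assert (Xk : / lam <= X ^ k).
  { unfold X. rewrite <- Rpower_pow by apply X_pos. rewrite Rpower_mult.
    rewrite <- (Rpower_1 lam) at 1 by lra. rewrite <- Rpower_Ropp. apply Rle_Rpower; auto.
    assert (1 <= INR K) by (replace 1 with (INR 1) by reflexivity; apply le_INR; lia).
    assert (INR k <= INR K) by (apply le_INR; auto).
    assert (0 <= INR k) by apply pos_INR.
    assert (E3 : - / INR K * INR k = - (INR k / INR K)) by (unfold Rdiv; ring). rewrite E3.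
    apply Ropp_le_contravar. unfold Rdiv. apply (Rmult_le_reg_r (INR K)); [lra|].
    rewrite Rmult_assoc, Rinv_l by lra. lra. }
  assert (Mk : mu0 ^ k <= mu0).
  { destruct k; [lia|]. simpl. assert (mu0 ^ k <= 1) by (apply pow_le1'; lra).
    assert (0 <= mu0 ^ k) by (apply pow_le; lra). nra. }
  assert (Pk : 0 < mu0 ^ k) by (apply pow_lt; auto).
  unfold Rdiv. rewrite Rpow_mult_distr, pow_inv.
  assert (mu * / mu0 ^ k >= 1).
  { apply Rle_ge. rewrite <- (Rinv_r (mu0 ^ k)) by lra. apply Rmult_le_compat_r.
    left; apply Rinv_0_lt_compat; auto. lra. }
  assert (lam * X ^ k >= 1).
  { apply Rle_ge. rewrite <- (Rinv_r lam) by lra. apply Rmult_le_compat_l; lra. }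
  assert (0 <= lam * X ^ k) by lra.
  replace (lam * mu * (X ^ k * / mu0 ^ k)) with ((lam * X ^ k) * (mu * / mu0 ^ k)) by ring.
  nra.
Qed.

Definition Mp (mu B2 L : R) (K : nat) := 2 / mu + L * B2 / mu ^ 2 + 4 ^ K / Rmin mu 1.

Lemma Mp_pos mu B2 L K : 0 < mu -> 0 <= B2 -> 0 <= L -> 0 < Mp mu B2 L K.
Proof.
  intros. unfold Mp. assert (0 < Rmin mu 1) by (apply Rmin_pos; lra).
  assert (0 < 4 ^ K / Rmin mu 1) by (apply Rdiv_lt_0_compat; auto; apply pow_lt; lra).
  assert (0 < 2 / mu) by (apply Rdiv_lt_0_compat; lra).
  assert (0 <= L * B2 / mu ^ 2) by (apply Rmult_le_pos; [nra|]; left; apply Rinv_0_lt_compat, pow_lt; auto).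
  lra.
Qed.

Lemma piece_bound phi a0 b0 L K mu B2 lam a' b' k :
  0 <= a' -> a' <= b' -> b' <= L -> a0 <= 0 -> L <= b0 -> Reg phi a0 b0 ->
  (1 <= k)%nat -> (k <= K)%nat -> 0 < mu -> 0 <= B2 -> 1 <= lam ->
  (forall t, 0 <= t <= L -> Rabs (Derive_n phi 2 t) <= B2) ->
  ((forall t, a' <= t <= b' -> mu <= Derive_n phi k t) \/ (forall t, a' <= t <= b' -> Derive_n phi k t <= - mu)) ->
  Rabs (cosI phi lam a' b') <= Mp mu B2 L K * Rpower lam (- / INR K).
Proof.
  intros H1 H2 H3 Ha0 Hb0 HR Hk HkK Hmu HB2 Hlam HB Hd.
  set (X := Rpower lam (- / INR K)).
  assert (HX : 0 < X) by apply X_pos.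
  assert (HR' : Reg phi a' b') by (eapply Reg_sub; eauto; lra).
  assert (Hmu0 : 0 < Rmin mu 1) by (apply Rmin_pos; lra).
  destruct k as [|[|j]]; [lia| |].
  -
    assert (ar : 2 / (lam * mu) + (b' - a') * B2 / (lam * mu ^ 2) <= Mp mu B2 L K * X).
    { assert (IX : / lam <= X) by (apply inv_le_X; auto; lia).
      assert (0 < 4 ^ K / Rmin mu 1) by (apply Rdiv_lt_0_compat; auto; apply pow_lt; lra).
      assert (E : 2 / (lam * mu) + (b' - a') * B2 / (lam * mu ^ 2) = (2 / mu + (b' - a') * B2 / mu ^ 2) * / lam)
        by (field; lra).
      rewrite E. unfold Mp.
      assert (0 <= 2 / mu + (b' - a') * B2 / mu ^ 2).
      { assert (0 < 2 / mu) by (apply Rdiv_lt_0_compat; lra).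
        assert (0 <= (b' - a') * B2 / mu ^ 2) by (apply Rmult_le_pos; [nra|]; left; apply Rinv_0_lt_compat, pow_lt; auto).
        lra. }
      assert ((b' - a') * B2 / mu ^ 2 <= L * B2 / mu ^ 2).
      { unfold Rdiv. apply Rmult_le_compat_r. left; apply Rinv_0_lt_compat, pow_lt; auto. nra. }
      assert (0 < / lam) by (apply Rinv_0_lt_compat; lra).
      apply Rle_trans with ((2 / mu + (b' - a') * B2 / mu ^ 2) * X). apply Rmult_le_compat_l; auto.
      apply Rmult_le_compat_r; lra. }
    destruct Hd as [Hd|Hd].
    + eapply Rle_trans; [|apply ar]. apply (vdc1_bnd phi a' b' mu lam B2); auto; try lra.
      intros t Ht. apply (HB t). lra.
    + rewrite <- cosI_opp. eapply Rle_trans; [|apply ar].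
      apply (vdc1_bnd (fun t => - phi t) a' b' mu lam B2); auto; try lra.
      * apply Reg_opp; auto.
      * intros t Ht. change (mu <= Derive_n (fun t => - phi t) 1 t). rewrite Derive_n_opp.
        specialize (Hd t Ht). lra.
      * intros t Ht. change (Rabs (Derive_n (fun t => - phi t) 2 t) <= B2). rewrite Derive_n_opp, Rabs_Ropp.
        apply HB; lra.
  -
    set (s := X / Rmin mu 1).
    assert (Hs : 0 < s) by (apply Rdiv_lt_0_compat; auto).
    eapply Rle_trans. apply (VD_all (S j) phi a' b' mu lam s); auto; try lra.
    + unfold s, X. apply pow_bound; auto. apply Rmin_l. apply Rmin_r.
    + intros; discriminate.
    + unfold Mp. fold X. 
      assert (4 ^ S (S j) <= 4 ^ K) by (apply Rle_pow; auto; lra).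
      assert (0 < 2 / mu) by (apply Rdiv_lt_0_compat; lra).
      assert (0 <= L * B2 / mu ^ 2) by (apply Rmult_le_pos; [nra|]; left; apply Rinv_0_lt_compat, pow_lt; auto).
      unfold s. unfold Rdiv.
      assert (0 < / Rmin mu 1) by (apply Rinv_0_lt_compat; auto).
      assert (4 ^ S (S j) * (X * / Rmin mu 1) <= 4 ^ K * / Rmin mu 1 * X).
      { replace (4 ^ S (S j) * (X * / Rmin mu 1)) with (4 ^ S (S j) * / Rmin mu 1 * X) by ring.
        apply Rmult_le_compat_r; [lra|]. apply Rmult_le_compat_r; lra. }
      unfold Rdiv in *. nra.
Qed.

Lemma cover_bound phi L a0 b0 K mu B2 N lam x :
  0 < L -> a0 <= 0 -> L <= b0 -> Reg phi a0 b0 -> (1 <= K)%nat -> 0 < mu -> 0 <= B2 -> (1 <= N)%nat ->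
  (forall t, 0 <= t <= L -> Rabs (Derive_n phi 2 t) <= B2) ->
  (forall i, (i < N)%nat -> exists k, (1 <= k)%nat /\ (k <= K)%nat /\
     ((forall t, INR i * (L / INR N) <= t <= INR (S i) * (L / INR N) -> mu <= Derive_n phi k t) \/
      (forall t, INR i * (L / INR N) <= t <= INR (S i) * (L / INR N) -> Derive_n phi k t <= - mu))) ->
  0 < lam -> 0 <= x <= L ->
  Rabs (cosI phi lam 0 x) <= (L + INR N * Mp mu B2 L K) * Rpower lam (- / INR K).
Proof.
  intros HL Ha0 Hb0 HR HK Hmu HB2 HN HB Hcov Hlam Hx.
  set (X := Rpower lam (- / INR K)).
  assert (HX : 0 < X) by apply X_pos.
  pose proof (Mp_pos mu B2 L K Hmu HB2 ltac:(lra)) as HMp.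
  assert (HNr : 1 <= INR N) by (replace 1 with (INR 1) by reflexivity; apply le_INR; auto).
  destruct (Rlt_le_dec lam 1) as [Hl|Hl].
  - assert (1 <= X) by (apply X_ge1; auto).
    eapply Rle_trans. apply cosI_triv; try lra. eapply Reg_sub; eauto; lra.
    assert (0 <= INR N * Mp mu B2 L K) by nra. nra.
  - set (d := L / INR N).
    assert (Hd : 0 < d) by (apply Rdiv_lt_0_compat; lra).
    assert (HNd : INR N * d = L) by (unfold d; field; lra).
    assert (claim : forall n, (n <= N)%nat -> Rabs (cosI phi lam 0 (Rmin x (INR n * d))) <= INR n * Mp mu B2 L K * X).
    { induction n; intros Hn.
      - simpl. rewrite Rmult_0_l, Rmin_right by lra. rewrite cosI_point, Rabs_R0. lra.
      - assert (Hn' : INR n * d <= INR (S n) * d) by (rewrite S_INR; lra).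
        assert (HSn : INR (S n) * d <= L) by (rewrite <- HNd; apply Rmult_le_compat_r; [lra|]; apply le_INR; auto).
        assert (Hmin : Rmin x (INR n * d) <= Rmin x (INR (S n) * d)).
        { unfold Rmin. destruct (Rle_dec x (INR n * d)), (Rle_dec x (INR (S n) * d)); lra. }
        assert (Hnn : 0 <= INR n * d) by (apply Rmult_le_pos; [apply pos_INR|lra]).
        assert (Hm0 : 0 <= Rmin x (INR n * d)) by (apply Rmin_glb; lra).
        assert (HmL : Rmin x (INR (S n) * d) <= L) by (pose proof (Rmin_l x (INR (S n) * d)); lra).
        rewrite (cosI_chasles phi lam 0 (Rmin x (INR n * d)) (Rmin x (INR (S n) * d))); auto.
        2: { eapply Reg_sub; eauto; lra. }
        assert (P : Rabs (cosI phi lam (Rmin x (INR n * d)) (Rmin x (INR (S n) * d))) <= Mp mu B2 L K * X).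
        { destruct (Rle_dec x (INR n * d)) as [Hxn|Hxn].
          - rewrite (Rmin_left x (INR n * d)) by lra. rewrite (Rmin_left x (INR (S n) * d)) by lra.
            rewrite cosI_point, Rabs_R0. nra.
          - destruct (Hcov n ltac:(lia)) as [k [Hk1 [Hk2 Hk3]]].
            rewrite (Rmin_right x (INR n * d)) by lra.
            apply (piece_bound phi a0 b0 L K mu B2 lam _ _ k); auto; try lra.
            pose proof (Rmin_r x (INR (S n) * d)).
            { apply Rmin_glb; lra. }
            pose proof (Rmin_r x (INR (S n) * d)).
            destruct Hk3 as [Hk3|Hk3]; [left|right]; intros t Ht; apply Hk3; fold d; lra. }
        pose proof (IHn ltac:(lia)).
        pose proof (Rabs_triang (cosI phi lam 0 (Rmin x (INR n * d))) (cosI phi lam (Rmin x (INR n * d)) (Rmin x (INR (S n) * d)))).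
        replace (INR (S n) * Mp mu B2 L K * X) with (INR n * Mp mu B2 L K * X + Mp mu B2 L K * X) by (rewrite S_INR; ring).
        lra. }
    specialize (claim N (le_n N)). rewrite HNd, Rmin_left in claim by lra.
    assert (0 <= L * X) by nra. nra.
Qed.

Definition SB (f : R -> R) (c r : R) := forall y, Rabs (y - c) < r -> forall n, ex_derive_n f n y.
Definition SM (f : R -> R) (x : R) := exists r, 0 < r /\ SB f x r.

Lemma ball_loc c r y : Rabs (y - c) < r -> locally y (fun z => Rabs (z - c) < r).
Proof.
  intros H. assert (He : 0 < r - Rabs (y - c)) by lra.
  exists (mkposreal _ He). intros z Hz. cbn in Hz. unfold AbsRing_ball, abs, minus, plus, opp in Hz; simpl in Hz.
  pose proof (Rabs_triang (z - y) (y - c)). replace (z - y + (y - c)) with (z - c) in H0 by ring. change (z + - y) with (z - y) in Hz. lra.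
Qed.

Lemma loc_and (P Q : R -> Prop) x : locally x P -> locally x Q -> locally x (fun y => P y /\ Q y).
Proof. intros; apply filter_and; auto. Qed.

Lemma loc_impl (P Q : R -> Prop) x : locally x P -> (forall y, P y -> Q y) -> locally x Q.
Proof. intros H1 H2. eapply filter_imp; [|exact H1]. auto. Qed.

Lemma SB_loc f c r y : SB f c r -> Rabs (y - c) < r ->
  locally y (fun z => forall k, (k <= 0 + 0 + 0)%nat \/ True -> ex_derive_n f k z).
Proof. intros H Hy. apply (loc_impl _ _ _ (ball_loc c r y Hy)). intros z Hz k _. apply H; auto. Qed.

Lemma SB_locn f c r y n : SB f c r -> Rabs (y - c) < r ->
  locally y (fun z => forall k, (k <= n)%nat -> ex_derive_n f k z).
Proof. intros H Hy. apply (loc_impl _ _ _ (ball_loc c r y Hy)). intros z Hz k _. apply H; auto. Qed.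

Lemma SB_ext f g c r : SB f c r -> (forall y, f y = g y) -> SB g c r.
Proof. intros H E y Hy n. apply ex_derive_n_ext with f; auto. Qed.

Lemma SB_Derive_n f c r k : SB f c r -> SB (Derive_n f k) c r.
Proof.
  intros H y Hy n. destruct n; [exact I|]. simpl.
  apply ex_derive_ext with (f := Derive_n f (n + k)).
  intros t; rewrite Derive_n_comp; auto.
  apply (H y Hy (S (n + k))).
Qed.

Lemma SB_Derive f c r : SB f c r -> SB (Derive f) c r.
Proof. intros H. apply (SB_Derive_n f c r 1 H). Qed.

Lemma SB_plus f g c r : SB f c r -> SB g c r -> SB (fun y => f y + g y) c r.
Proof.
  intros Hf Hg y Hy n. apply ex_derive_n_plus; eapply SB_locn; eauto.
Qed.

Lemma SB_scal a f c r : SB f c r -> SB (fun y => a * f y) c r.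
Proof. intros Hf y Hy n. apply ex_derive_n_scal_l; auto. Qed.

Lemma SB_opp f c r : SB f c r -> SB (fun y => - f y) c r.
Proof. intros Hf y Hy n. apply ex_derive_n_opp; auto. Qed.

Lemma SB_const a c r : SB (fun _ => a) c r.
Proof. intros y Hy n. apply ex_derive_n_const. Qed.

Lemma SB_sub f c r c' r' : SB f c r -> (forall y, Rabs (y - c') < r' -> Rabs (y - c) < r) -> SB f c' r'.
Proof. intros H H' y Hy n; apply H; auto. Qed.

Lemma SB_ind (P : (R -> R) -> Prop) c r :
  (forall h, P h -> forall y, Rabs (y - c) < r -> ex_derive h y) ->
  (forall h, P h -> exists h1 h2, P h1 /\ P h2 /\ forall y, Rabs (y - c) < r -> Derive h y = h1 y + h2 y) ->
  forall h, P h -> SB h c r.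
Proof.
  intros H0 H1.
  assert (claim : forall n h, P h -> forall y, Rabs (y - c) < r -> forall k, (k <= n)%nat -> ex_derive (Derive_n h k) y).
  { induction n; intros h Ph y Hy k Hk.
    - assert (k = 0%nat) by lia. subst. apply H0; auto.
    - destruct k; [apply H0; auto|].
      destruct (H1 h Ph) as [h1 [h2 [P1 [P2 E]]]].
      assert (Ek : forall z, Rabs (z - c) < r -> Derive_n h (S k) z = Derive_n h1 k z + Derive_n h2 k z).
      { intros z Hz. replace (S k) with (k + 1)%nat by lia. rewrite <- (Derive_n_comp h k 1). change (Derive_n h 1) with (Derive h).
        rewrite (Derive_n_ext_loc (Derive h) (fun z => h1 z + h2 z)).
        2: { apply (loc_impl _ _ _ (ball_loc c r z Hz)). intros; apply E; auto. }
        apply Derive_n_plus.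
        - apply (loc_impl _ _ _ (ball_loc c r z Hz)). intros w Hw j Hj. destruct j; [exact I|].
          apply IHn; auto. lia.
        - apply (loc_impl _ _ _ (ball_loc c r z Hz)). intros w Hw j Hj. destruct j; [exact I|].
          apply IHn; auto. lia. }
      apply ex_derive_ext_loc with (f := fun z => Derive_n h1 k z + Derive_n h2 k z).
      { apply (loc_impl _ _ _ (ball_loc c r y Hy)). intros; symmetry; apply Ek; auto. }
      apply (@ex_derive_plus R_AbsRing R_NormedModule); apply IHn; auto; lia. }
  intros h Ph y Hy n. destruct n; [exact I|]. apply (claim n); auto.
Qed.

Lemma SB_mult f g c r : SB f c r -> SB g c r -> SB (fun y => f y * g y) c r.
Proof.
  intros Hf Hg.
  apply (SB_ind (fun h => exists f g, SB f c r /\ SB g c r /\ forall y, h y = f y * g y)).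
  - intros h [f1 [g1 [H1 [H2 E]]]] y Hy. apply ex_derive_ext with (f := fun y => f1 y * g1 y).
    intros; auto. apply ex_derive_mult. apply (H1 y Hy 1%nat). apply (H2 y Hy 1%nat).
  - intros h [f1 [g1 [H1 [H2 E]]]].
    exists (fun y => Derive f1 y * g1 y), (fun y => f1 y * Derive g1 y). split; [|split].
    + exists (Derive f1), g1. repeat split; auto. apply SB_Derive; auto.
    + exists f1, (Derive g1). repeat split; auto. apply SB_Derive; auto.
    + intros y Hy. rewrite (Derive_ext h (fun y => f1 y * g1 y)) by auto.
      apply Derive_mult. apply (H1 y Hy 1%nat). apply (H2 y Hy 1%nat).
  - exists f, g. repeat split; auto.
Qed.

Lemma SB_inv f c r : SB f c r -> (forall y, Rabs (y - c) < r -> f y <> 0) -> SB (fun y => / f y) c r.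
Proof.
  intros Hf Hnz.
  assert (G : forall h, (exists a j, SB a c r /\ forall y, h y = a y * (/ f y) ^ j) -> SB h c r).
  { apply SB_ind.
    - intros h [a [j [Ha E]]] y Hy. apply ex_derive_ext with (f := fun y => a y * (/ f y) ^ j).
      intros; auto. specialize (Hnz y Hy).
      assert (ex_derive a y) by apply (Ha y Hy 1%nat). assert (ex_derive f y) by apply (Hf y Hy 1%nat).
      auto_derive. repeat split; auto.
    - intros h [a [j [Ha E]]].
      exists (fun y => Derive a y * (/ f y) ^ j), (fun y => (- INR j * a y * Derive f y) * (/ f y) ^ (S j)).
      split; [|split].
      + exists (Derive a), j. split; auto. apply SB_Derive; auto.
      + exists (fun y => - INR j * a y * Derive f y), (S j). split; auto.
        apply SB_mult. apply SB_mult. apply SB_const. auto. apply SB_Derive; auto.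
      + intros y Hy. rewrite (Derive_ext h (fun y => a y * (/ f y) ^ j)) by auto.
        specialize (Hnz y Hy).
        assert (Ea : ex_derive a y) by apply (Ha y Hy 1%nat). assert (Ef : ex_derive f y) by apply (Hf y Hy 1%nat).
        apply is_derive_unique. auto_derive. repeat split; auto.
        change (fun x : R => a x) with a. change (fun x : R => f x) with f. destruct j; simpl; [ring|]. field. auto. }
  apply G. exists (fun _ => 1), 1%nat. split. apply SB_const. intros; simpl; ring.
Qed.

Lemma cv_of_ex (a : nat -> R) z : ex_pseries a z -> Rbar_le (Rabs z) (CV_radius a).
Proof.
  intros H. apply ex_series_lim_0 in H.
  destruct (filterlim_bounded (K := R_AbsRing) (V := R_NormedModule) _ (ex_intro _ 0 H)) as [M HM].
  destruct (CV_radius_bounded a) as [Hub _]. apply Hub.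
  exists M. intros n. specialize (HM n).
  replace (Rabs (a n * Rabs z ^ n)) with (Rabs (z ^ n * a n)) by (rewrite !Rabs_mult, !RPow_abs, Rabs_Rabsolu; ring).
  unfold norm in HM; simpl in HM. unfold abs in HM; simpl in HM. unfold scal in HM; simpl in HM.
  unfold mult in HM; simpl in HM. rewrite pow_n_pow in HM. exact HM.
Qed.

Lemma cv_lt (a : nat -> R) r z : (forall y, Rabs y < r -> ex_pseries a y) -> Rabs z < r ->
  Rbar_lt (Rabs z) (CV_radius a).
Proof.
  intros H Hz. set (z' := (Rabs z + r) / 2).
  pose proof (Rabs_pos z).
  assert (Ez : Rabs z' = z') by (apply Rabs_pos_eq; unfold z'; lra).
  assert (Hz' : Rabs z' < r) by (rewrite Ez; unfold z'; lra).
  pose proof (cv_of_ex a z' (H z' Hz')).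
  assert (Rabs z < Rabs z') by (rewrite Ez; unfold z'; lra).
  destruct (CV_radius a); simpl in *; auto. lra.
Qed.

Lemma analytic_SM f x : analytic_at f x -> SM f x.
Proof.
  intros [a [r [Hr H]]]. exists r. split; auto.
  assert (Hcv : forall y, Rabs (y - x) < r -> Rbar_lt (Rabs (y - x)) (CV_radius a)).
  { intros y Hy. apply cv_lt with r; auto. intros z Hz.
    specialize (H (z + x) ltac:(replace (z + x - x) with z by ring; auto)).
    replace (z + x - x) with z in H by ring. eexists; eauto. }
  intros y Hy n.
  apply ex_derive_n_ext_loc with (f := fun z => PSeries a (z + - x)).
  { apply (loc_impl _ _ _ (ball_loc x r y Hy)). intros z Hz. replace (z + - x) with (z - x) by ring. apply is_pseries_unique. apply H; auto. }
  apply ex_derive_n_comp_trans. apply ex_derive_n_PSeries. apply Hcv; auto.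
Qed.

Definition Vz (f : R -> R) (t0 : R) (m : nat) := forall j, (j <= m)%nat -> Derive_n f j t0 = 0.

Lemma Vz_le f t0 m m' : Vz f t0 m -> (m' <= m)%nat -> Vz f t0 m'.
Proof. intros H Hm j Hj. apply H. lia. Qed.

Lemma Vz_Derive f t0 m : Vz f t0 (S m) -> Vz (Derive f) t0 m.
Proof.
  intros H j Hj. change (Derive f) with (Derive_n f 1). rewrite Derive_n_comp. apply H. lia.
Qed.

Lemma Vz_ext_loc f g t0 m r : 0 < r -> (forall y, Rabs (y - t0) < r -> f y = g y) -> Vz f t0 m -> Vz g t0 m.
Proof.
  intros Hr E H j Hj. rewrite <- (Derive_n_ext_loc f g).
  apply H; auto. apply (loc_impl _ _ _ (ball_loc t0 r t0 ltac:(rewrite Rminus_diag, Rabs_R0; lra))). auto.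
Qed.

Lemma Vz_plus f g t0 m r : 0 < r -> SB f t0 r -> SB g t0 r -> Vz f t0 m -> Vz g t0 m ->
  Vz (fun y => f y + g y) t0 m.
Proof.
  intros Hr Hf Hg H1 H2 j Hj. rewrite Derive_n_plus. rewrite H1, H2 by auto. ring.
  apply (SB_locn _ t0 r); auto. rewrite Rminus_diag, Rabs_R0; lra.
  apply (SB_locn _ t0 r); auto. rewrite Rminus_diag, Rabs_R0; lra.
Qed.

Lemma Vz_mult m : forall f g t0 r, 0 < r -> SB f t0 r -> SB g t0 r -> Vz f t0 m -> Vz (fun y => f y * g y) t0 m.
Proof.
  induction m; intros f g t0 r Hr Hf Hg Hv j Hj.
  - assert (j = 0%nat) by lia. subst. simpl. pose proof (Hv 0%nat ltac:(lia)) as H0; simpl in H0. rewrite H0. ring.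
  - destruct j. simpl. pose proof (Hv 0%nat ltac:(lia)) as H0; simpl in H0. rewrite H0. ring.
    replace (S j) with (j + 1)%nat by lia. rewrite <- Derive_n_comp.
    change (Derive_n (fun y => f y * g y) 1) with (Derive (fun y => f y * g y)).
    assert (H0 : 0 <= Rabs (t0 - t0) < r) by (rewrite Rminus_diag, Rabs_R0; lra).
    rewrite (Derive_n_ext_loc _ (fun y => Derive f y * g y + f y * Derive g y)).
    2: { apply (loc_impl _ _ _ (ball_loc t0 r t0 ltac:(lra))). intros y Hy.
         apply Derive_mult. apply (Hf y Hy 1%nat). apply (Hg y Hy 1%nat). }
    apply (Vz_plus _ _ t0 m r); auto; try lia.
    + apply SB_mult; auto. apply SB_Derive; auto.
    + apply SB_mult; auto. apply SB_Derive; auto.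
    + apply (IHm (Derive f) g t0 r); auto. apply SB_Derive; auto. apply Vz_Derive; auto.
    + apply (IHm f (Derive g) t0 r); auto. apply SB_Derive; auto. apply Vz_le with (S m); auto.
Qed.

Lemma tors_alg (u1 u2 u3 w : R -> R) t :
  ex_derive u1 t -> ex_derive u2 t -> ex_derive u3 t ->
  ex_derive (Derive u1) t -> ex_derive (Derive u2) t -> ex_derive (Derive u3) t -> ex_derive w t ->
  - (Derive (fun s => u2 s * (w s * Derive u3 s) - u3 s * (w s * Derive u2 s)) t * (w t * Derive u1 t) +
     Derive (fun s => u3 s * (w s * Derive u1 s) - u1 s * (w s * Derive u3 s)) t * (w t * Derive u2 t) +
     Derive (fun s => u1 s * (w s * Derive u2 s) - u2 s * (w s * Derive u1 s)) t * (w t * Derive u3 t))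
  = w t ^ 2 * (u1 t * (Derive u2 t * Derive (Derive u3) t - Derive u3 t * Derive (Derive u2) t)
             + u2 t * (Derive u3 t * Derive (Derive u1) t - Derive u1 t * Derive (Derive u3) t)
             + u3 t * (Derive u1 t * Derive (Derive u2) t - Derive u2 t * Derive (Derive u1) t)).
Proof.
  intros E1 E2 E3 F1 F2 F3 Ew.
  erewrite (is_derive_unique (fun s => u2 s * (w s * Derive u3 s) - u3 s * (w s * Derive u2 s))).
  2: { auto_derive. repeat split; auto. reflexivity. }
  erewrite (is_derive_unique (fun s => u3 s * (w s * Derive u1 s) - u1 s * (w s * Derive u3 s))).
  2: { auto_derive. repeat split; auto. reflexivity. }
  erewrite (is_derive_unique (fun s => u1 s * (w s * Derive u2 s) - u2 s * (w s * Derive u1 s))).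
  2: { auto_derive. repeat split; auto. reflexivity. }
  change (fun x => u1 x) with u1. change (fun x => u2 x) with u2. change (fun x => u3 x) with u3.
  change (fun x => w x) with w.
  change (fun x => Derive u1 x) with (Derive u1). change (fun x => Derive u2 x) with (Derive u2).
  change (fun x => Derive u3 x) with (Derive u3).
  ring.
Qed.

Definition cx (g : R -> v3) := fun s => vx (g s).
Definition cy (g : R -> v3) := fun s => vy (g s).
Definition cz (g : R -> v3) := fun s => vz (g s).
Definition Gv (g : R -> v3) (k : nat) (t : R) : v3 :=
  mkv3 (Derive_n (cx g) k t) (Derive_n (cy g) k t) (Derive_n (cz g) k t).
Definition det3 (u v w : v3) : R := dot3 u (cross3 v w).

Lemma torsion_formula (g : R -> v3) t :
  (forall k, (k <= 3)%nat -> ex_derive (Derive_n (cx g) k) t /\ ex_derive (Derive_n (cy g) k) t /\ ex_derive (Derive_n (cz g) k) t) ->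
  0 < dot3 (Gv g 2 t) (Gv g 2 t) ->
  torsion g t = det3 (Gv g 1 t) (Gv g 2 t) (Gv g 3 t) / dot3 (Gv g 2 t) (Gv g 2 t).
Proof.
  intros HE Hq.
  set (u1 := Derive (cx g)). set (u2 := Derive (cy g)). set (u3 := Derive (cz g)).
  set (w := fun s => / sqrt (Derive u1 s * Derive u1 s + Derive u2 s * Derive u2 s + Derive u3 s * Derive u3 s)).
  assert (T : torsion g t =
    - (Derive (fun s => u2 s * (w s * Derive u3 s) - u3 s * (w s * Derive u2 s)) t * (w t * Derive u1 t) +
     Derive (fun s => u3 s * (w s * Derive u1 s) - u1 s * (w s * Derive u3 s)) t * (w t * Derive u2 t) +
     Derive (fun s => u1 s * (w s * Derive u2 s) - u2 s * (w s * Derive u1 s)) t * (w t * Derive u3 t))).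
  { reflexivity. }
  destruct (HE 1%nat ltac:(lia)) as [E1 [E2 E3]].
  destruct (HE 2%nat ltac:(lia)) as [F1 [F2 F3]].
  destruct (HE 3%nat ltac:(lia)) as [H1 [H2 H3]].
  rewrite T, tors_alg; auto.
  2: { unfold w. simpl in Hq. unfold dot3 in Hq. simpl in Hq.
       assert (0 < sqrt (Derive u1 t * Derive u1 t + Derive u2 t * Derive u2 t + Derive u3 t * Derive u3 t))
         by (apply sqrt_lt_R0; exact Hq).
       auto_derive. repeat split; auto. lra. }
  assert (R1 : det3 (Gv g 1 t) (Gv g 2 t) (Gv g 3 t) / dot3 (Gv g 2 t) (Gv g 2 t) =
    (u1 t * (Derive u2 t * Derive (Derive u3) t - Derive u3 t * Derive (Derive u2) t)
             + u2 t * (Derive u3 t * Derive (Derive u1) t - Derive u1 t * Derive (Derive u3) t)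
             + u3 t * (Derive u1 t * Derive (Derive u2) t - Derive u2 t * Derive (Derive u1) t)) /
    (Derive u1 t * Derive u1 t + Derive u2 t * Derive u2 t + Derive u3 t * Derive u3 t)) by reflexivity.
  assert (Hq' : 0 < Derive u1 t * Derive u1 t + Derive u2 t * Derive u2 t + Derive u3 t * Derive u3 t) by exact Hq.
  rewrite R1. clear R1 T.
  assert (Ew : w t ^ 2 = / (Derive u1 t * Derive u1 t + Derive u2 t * Derive u2 t + Derive u3 t * Derive u3 t)).
  { unfold w. rewrite pow_inv. rewrite <- Rsqr_pow2, Rsqr_sqrt by lra. reflexivity. }
  rewrite Ew. field. lra.
Qed.

Lemma SB_self f c r : 0 < r -> SB f c r -> forall n, ex_derive_n f n c.
Proof. intros Hr H n. apply H. rewrite Rminus_diag, Rabs_R0; lra. Qed.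

Lemma SB_ex f c r n : 0 < r -> SB f c r -> ex_derive (Derive_n f n) c.
Proof. intros Hr H. apply (SB_self f c r Hr H (S n)). Qed.

Lemma SB_minus f g c r : SB f c r -> SB g c r -> SB (fun y => f y - g y) c r.
Proof. intros. apply SB_plus; auto. apply SB_opp; auto. Qed.

Lemma Dn_lin (f g h : R -> R) p q s i j t r : 0 < r -> SB f t r -> SB g t r -> SB h t r ->
  Derive_n (fun y => p * Derive_n f i y + q * Derive_n g i y + s * Derive_n h i y) j t =
  p * Derive_n f (j + i) t + q * Derive_n g (j + i) t + s * Derive_n h (j + i) t.
Proof.
  intros Hr Hf Hg Hh.
  assert (H0 : Rabs (t - t) < r) by (rewrite Rminus_diag, Rabs_R0; lra).
  rewrite Derive_n_plus.
  2: { apply (SB_locn _ t r); auto. apply SB_plus; apply SB_scal; apply SB_Derive_n; auto. }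
  2: { apply (SB_locn _ t r); auto. apply SB_scal; apply SB_Derive_n; auto. }
  rewrite Derive_n_plus.
  2: { apply (SB_locn _ t r); auto. apply SB_scal; apply SB_Derive_n; auto. }
  2: { apply (SB_locn _ t r); auto. apply SB_scal; apply SB_Derive_n; auto. }
  rewrite !Derive_n_scal_l, !Derive_n_comp. reflexivity.
Qed.

Lemma cont_nz (f : R -> R) x : continuous f x -> f x <> 0 -> exists r, 0 < r /\ forall y, Rabs (y - x) < r -> f y <> 0.
Proof.
  intros Hc Hn. apply cpt in Hc. destruct (Hc (Rabs (f x)) ltac:(apply Rabs_pos_lt; auto)) as [al [Hal H]].
  exists al. split; auto. intros y Hy Hfy. destruct (Req_dec y x) as [->|Hne]; [auto|].
  specialize (H y (conj (conj I (not_eq_sym Hne)) Hy)). unfold R_dist in H. rewrite Hfy in H.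
  simpl in H. unfold R_dist in H. rewrite Rminus_0_l, Rabs_Ropp in H. lra.
Qed.

Lemma cont_pos (f : R -> R) x : continuous f x -> 0 < f x -> exists r, 0 < r /\ forall y, Rabs (y - x) < r -> 0 < f y.
Proof.
  intros Hc Hn. apply cpt in Hc. destruct (Hc (f x) Hn) as [al [Hal H]].
  exists al. split; auto. intros y Hy. destruct (Req_dec y x) as [->|Hne]; [auto|].
  specialize (H y (conj (conj I (not_eq_sym Hne)) Hy)). unfold R_dist in H.
  apply Rabs_lt_between' in H. lra.
Qed.

Lemma deriv_zero_const (f : R -> R) a b t l : a < b -> a <= t <= b -> (forall s, a <= s <= b -> f s = f t) ->
  is_derive f t l -> l = 0.
Proof.
  intros Hab Ht Hc Hd. apply is_derive_Reals in Hd.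
  destruct (Req_dec l 0) as [|Hl]; auto. exfalso.
  destruct (Hd (Rabs l / 2) ltac:(apply Rdiv_lt_0_compat; [apply Rabs_pos_lt; auto|lra])) as [dl Hdl].
  pose proof (cond_pos dl) as Hdp.
  destruct (Rlt_le_dec t b) as [Htb|Htb].
  - set (h := Rmin (dl / 2) (b - t)).
    assert (Hh : 0 < h) by (apply Rmin_pos; lra).
    assert (h <= dl / 2) by apply Rmin_l. assert (h <= b - t) by apply Rmin_r.
    specialize (Hdl h ltac:(lra) ltac:(rewrite Rabs_pos_eq; lra)).
    rewrite (Hc (t + h)) in Hdl by lra. rewrite Rminus_diag, Rdiv_0_l, Rminus_0_l, Rabs_Ropp in Hdl.
    pose proof (Rabs_pos_lt l Hl). lra.
  - set (h := - Rmin (dl / 2) (b - a)).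
    assert (Hh : 0 < - h) by (unfold h; rewrite Ropp_involutive; apply Rmin_pos; lra).
    assert (- h <= dl / 2) by (unfold h; rewrite Ropp_involutive; apply Rmin_l).
    assert (- h <= b - a) by (unfold h; rewrite Ropp_involutive; apply Rmin_r).
    specialize (Hdl h ltac:(lra) ltac:(rewrite Rabs_left; lra)).
    rewrite (Hc (t + h)) in Hdl by lra. rewrite Rminus_diag, Rdiv_0_l, Rminus_0_l, Rabs_Ropp in Hdl.
    pose proof (Rabs_pos_lt l Hl). lra.
Qed.

Ltac sbt := repeat match goal with
 | |- SB (fun y => Derive_n ?f ?k y) ?c ?r => apply (SB_Derive_n f c r k); assumption
 | |- SB (fun y => @?F y + @?G y) _ _ => apply (SB_plus F G)
 | |- SB (fun y => @?F y - @?G y) _ _ => apply (SB_minus F G)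
 | |- SB (fun y => @?F y * @?G y) _ _ => apply (SB_mult F G)
 | |- SB (fun _ => ?a) _ _ => apply SB_const
 end.

Ltac v3simpl := unfold det3, dot3, cross3, Gv; cbn [vx vy vz mkv3 fst snd].

Lemma t0_nondeg (g : R -> v3) t0 m r :
  0 < r -> SB (cx g) t0 r -> SB (cy g) t0 r -> SB (cz g) t0 r ->
  dot3 (Gv g 1 t0) (Gv g 2 t0) = 0 -> dot3 (Gv g 1 t0) (Gv g 1 t0) = 1 ->
  0 < dot3 (Gv g 2 t0) (Gv g 2 t0) ->
  Derive_n (torsion g) m t0 <> 0 ->
  (forall k, (3 <= k <= m + 3)%nat -> det3 (Gv g 1 t0) (Gv g 2 t0) (Gv g k t0) = 0) -> False.
Proof.
  intros Hr Sx Sy Sz Horth Hunit Hq Htau Hdet.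
  assert (Hdet' : forall k, (1 <= k <= m + 3)%nat -> det3 (Gv g 1 t0) (Gv g 2 t0) (Gv g k t0) = 0).
  { intros k Hk. destruct (Compare_dec.le_lt_dec 3 k). apply Hdet; lia.
    destruct k as [|[|[|k]]]; try lia; v3simpl; ring. }
  set (xi := cross3 (Gv g 1 t0) (Gv g 2 t0)).
  set (Ai := fun (i : nat) y => vx xi * Derive_n (cx g) i y + vy xi * Derive_n (cy g) i y + vz xi * Derive_n (cz g) i y).
  assert (SAi : forall i, SB (Ai i) t0 r) by (intros i; unfold Ai; sbt).
  assert (VA : forall i, (1 <= i <= 3)%nat -> Vz (Ai i) t0 m).
  { intros i Hi j Hj. unfold Ai. rewrite (Dn_lin _ _ _ _ _ _ i j t0 r) by auto.
    rewrite <- (Hdet' (j + i)%nat) by lia. unfold xi. v3simpl. ring. }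
  set (nf := fun y => cross3 (Gv g 1 y) (Gv g 2 y)).
  set (ef := fun y => dot3 xi (nf y)).
  set (Pf := fun y => dot3 (cross3 (Gv g 2 y) (Gv g 3 y)) (nf y)).
  set (Qf := fun y => dot3 (cross3 (Gv g 3 y) (Gv g 1 y)) (nf y)).
  set (Rf := fun y => dot3 (nf y) (nf y)).
  set (Df := fun y => det3 (Gv g 1 y) (Gv g 2 y) (Gv g 3 y)).
  set (RHS := fun y => Ai 1%nat y * Pf y + Ai 2%nat y * Qf y + Ai 3%nat y * Rf y).
  assert (Iden : forall y, Df y * ef y = RHS y).
  { intros y. unfold Df, ef, RHS, Ai, Pf, Qf, Rf, nf. v3simpl. ring. }
  assert (SP : SB Pf t0 r) by (unfold Pf, nf; v3simpl; sbt).
  assert (SQ : SB Qf t0 r) by (unfold Qf, nf; v3simpl; sbt).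
  assert (SR : SB Rf t0 r) by (unfold Rf, nf; v3simpl; sbt).
  assert (Se : SB ef t0 r) by (unfold ef, nf; v3simpl; sbt).
  assert (SD : SB Df t0 r) by (unfold Df; v3simpl; sbt).
  assert (SRHS : SB RHS t0 r) by (unfold RHS; sbt; auto).
  assert (VRHS : Vz RHS t0 m).
  { unfold RHS.
    assert (V1 : Vz (fun y => Ai 1%nat y * Pf y) t0 m) by (apply (Vz_mult m _ _ t0 r); auto; apply VA; lia).
    assert (V2 : Vz (fun y => Ai 2%nat y * Qf y) t0 m) by (apply (Vz_mult m _ _ t0 r); auto; apply VA; lia).
    assert (V3 : Vz (fun y => Ai 3%nat y * Rf y) t0 m) by (apply (Vz_mult m _ _ t0 r); auto; apply VA; lia).
    apply (Vz_plus (fun y => Ai 1%nat y * Pf y + Ai 2%nat y * Qf y) (fun y => Ai 3%nat y * Rf y) t0 m r);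
      [exact Hr | apply SB_plus; apply SB_mult; auto | apply SB_mult; auto | | exact V3].
    apply (Vz_plus (fun y => Ai 1%nat y * Pf y) (fun y => Ai 2%nat y * Qf y) t0 m r);
      [exact Hr | apply SB_mult; auto | apply SB_mult; auto | exact V1 | exact V2]. }
  assert (He0 : 0 < ef t0).
  { assert (E : ef t0 = dot3 (Gv g 1 t0) (Gv g 1 t0) * dot3 (Gv g 2 t0) (Gv g 2 t0) - dot3 (Gv g 1 t0) (Gv g 2 t0) ^ 2)
      by (unfold ef, nf, xi; v3simpl; ring).
    set (a1 := dot3 (Gv g 1 t0) (Gv g 1 t0)) in *. set (a2 := dot3 (Gv g 2 t0) (Gv g 2 t0)) in *.
    set (a3 := dot3 (Gv g 1 t0) (Gv g 2 t0)) in *. clearbody a1 a2 a3. subst a1 a3. nra. }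
  assert (H0 : Rabs (t0 - t0) < r) by (rewrite Rminus_diag, Rabs_R0; lra).
  destruct (cont_pos ef t0) as [r1 [Hr1 Hpos1]]; auto.
  { apply exd_cont. apply (Se t0 H0 1%nat). }
  set (qf := fun y => dot3 (Gv g 2 y) (Gv g 2 y)).
  assert (Sq : SB qf t0 r) by (unfold qf; v3simpl; sbt).
  destruct (cont_pos qf t0) as [r2 [Hr2 Hpos2]]; auto.
  { apply exd_cont. apply (Sq t0 H0 1%nat). }
  set (rr := Rmin r (Rmin r1 r2)).
  assert (Hrr : 0 < rr) by (apply Rmin_pos; auto; apply Rmin_pos; auto).
  assert (Br : forall y, Rabs (y - t0) < rr -> Rabs (y - t0) < r /\ Rabs (y - t0) < r1 /\ Rabs (y - t0) < r2).
  { intros y Hy. pose proof (Rmin_l r (Rmin r1 r2)). pose proof (Rmin_r r (Rmin r1 r2)).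
    pose proof (Rmin_l r1 r2). pose proof (Rmin_r r1 r2). fold rr in H, H1. lra. }
  assert (Sinv : SB (fun y => / ef y) t0 rr).
  { apply SB_inv. apply SB_sub with t0 r; auto. intros y Hy; apply Br; auto.
    intros y Hy. apply Rgt_not_eq, Hpos1, Br; auto. }
  assert (VD : Vz Df t0 m).
  { apply (Vz_ext_loc (fun y => RHS y * / ef y) Df t0 m rr); auto.
    - intros y Hy. rewrite <- Iden. field. apply Rgt_not_eq, Hpos1, Br; auto.
    - apply (Vz_mult m _ _ t0 rr); auto. apply SB_sub with t0 r; auto. intros y Hy; apply Br; auto. }
  assert (Sqinv : SB (fun y => / qf y) t0 rr).
  { apply SB_inv. apply SB_sub with t0 r; auto. intros y Hy; apply Br; auto.
    intros y Hy. apply Rgt_not_eq, Hpos2, Br; auto. }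
  assert (VT : Vz (torsion g) t0 m).
  { apply (Vz_ext_loc (fun y => Df y * / qf y) (torsion g) t0 m rr); auto.
    - intros y Hy. destruct (Br y Hy) as [Hy1 [Hy2 Hy3]].
      rewrite torsion_formula. reflexivity.
      + intros k Hk. repeat split; [apply (Sx y Hy1 (S k)) | apply (Sy y Hy1 (S k)) | apply (Sz y Hy1 (S k))].
      + apply Hpos2; auto.
    - apply (Vz_mult m _ _ t0 rr); auto. apply SB_sub with t0 r; auto. intros y Hy; apply Br; auto. }
  apply Htau, VT. lia.
Qed.

Lemma cross_bound a b c d B : Rabs a <= B -> Rabs b <= B -> Rabs c <= B -> Rabs d <= B ->
  Rabs (a * b - c * d) <= 2 * B ^ 2.
Proof.
  intros. unfold Rminus. eapply Rle_trans. apply Rabs_triang. rewrite Rabs_Ropp, !Rabs_mult.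
  pose proof (Rabs_pos a). pose proof (Rabs_pos b). pose proof (Rabs_pos c). pose proof (Rabs_pos d).
  assert (Rabs a * Rabs b <= B * B) by (apply Rmult_le_compat; auto).
  assert (Rabs c * Rabs d <= B * B) by (apply Rmult_le_compat; auto).
  simpl. lra.
Qed.

Lemma lin3_bound p q s x y z e M : Rabs p <= e -> Rabs q <= e -> Rabs s <= e ->
  Rabs x <= M -> Rabs y <= M -> Rabs z <= M -> Rabs (p * x + q * y + s * z) <= 3 * e * M.
Proof.
  intros. eapply Rle_trans. apply Rabs_triang. eapply Rle_trans. apply Rplus_le_compat_r. apply Rabs_triang.
  rewrite !Rabs_mult.
  pose proof (Rabs_pos p). pose proof (Rabs_pos q). pose proof (Rabs_pos s).
  pose proof (Rabs_pos x). pose proof (Rabs_pos y). pose proof (Rabs_pos z).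
  assert (Rabs p * Rabs x <= e * M) by (apply Rmult_le_compat; auto).
  assert (Rabs q * Rabs y <= e * M) by (apply Rmult_le_compat; auto).
  assert (Rabs s * Rabs z <= e * M) by (apply Rmult_le_compat; auto).
  lra.
Qed.

Definition vbound (u : v3) B := Rabs (vx u) <= B /\ Rabs (vy u) <= B /\ Rabs (vz u) <= B.

Lemma det_bound (u v w xi : v3) B e : dot3 xi xi = 1 -> vbound u B -> vbound v B -> vbound w B ->
  Rabs (dot3 xi u) <= e -> Rabs (dot3 xi v) <= e -> Rabs (dot3 xi w) <= e ->
  det3 u v w ^ 2 <= 108 * e ^ 2 * B ^ 4.
Proof.
  intros Hxi [u1 [u2 u3]] [v1 [v2 v3]] [w1 [w2 w3]] Ha Hb Hc.
  destruct u as [[ux uy] uz]; destruct v as [[vx' vy'] vz']; destruct w as [[wx wy] wz];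
  destruct xi as [[a b] c]. unfold vbound, det3, dot3, cross3, mkv3 in *; cbn in *.
  set (d := ux * (vy' * wz - vz' * wy) + uy * (vz' * wx - vx' * wz) + uz * (vx' * wy - vy' * wx)).
  set (A := a * ux + b * uy + c * uz). set (Bv := a * vx' + b * vy' + c * vz'). set (C := a * wx + b * wy + c * wz).
  assert (X1 : d * a = A * (vy' * wz - vz' * wy) + Bv * (wy * uz - wz * uy) + C * (uy * vz' - uz * vy'))
    by (unfold d, A, Bv, C; nra).
  assert (X2 : d * b = A * (vz' * wx - vx' * wz) + Bv * (wz * ux - wx * uz) + C * (uz * vx' - ux * vz'))
    by (unfold d, A, Bv, C; nra).
  assert (X3 : d * c = A * (vx' * wy - vy' * wx) + Bv * (wx * uy - wy * ux) + C * (ux * vy' - uy * vx'))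
    by (unfold d, A, Bv, C; nra).
  assert (Hab : 0 <= e) by (pose proof (Rabs_pos (a * ux + b * uy + c * uz)); lra).
  assert (HB : 0 <= B) by (pose proof (Rabs_pos ux); lra).
  assert (Y1 : Rabs (d * a) <= 3 * e * (2 * B ^ 2)).
  { rewrite X1. apply lin3_bound; auto; apply cross_bound; auto. }
  assert (Y2 : Rabs (d * b) <= 3 * e * (2 * B ^ 2)).
  { rewrite X2. apply lin3_bound; auto; apply cross_bound; auto. }
  assert (Y3 : Rabs (d * c) <= 3 * e * (2 * B ^ 2)).
  { rewrite X3. apply lin3_bound; auto; apply cross_bound; auto. }
  assert (Z : forall x M, Rabs x <= M -> x ^ 2 <= M ^ 2).
  { intros x M H. pose proof (Rabs_pos x). rewrite <- (pow2_abs x). nra. }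
  apply Z in Y1. apply Z in Y2. apply Z in Y3.
  assert (E : d ^ 2 = (d * a) ^ 2 + (d * b) ^ 2 + (d * c) ^ 2).
  { replace ((d * a) ^ 2 + (d * b) ^ 2 + (d * c) ^ 2) with (d ^ 2 * (a * a + b * b + c * c)) by ring.
    rewrite Hxi. ring. }
  assert (F : d ^ 2 <= 108 * e ^ 2 * B ^ 4).
  { rewrite E. replace (108 * e ^ 2 * B ^ 4) with (3 * (3 * e * (2 * B ^ 2)) ^ 2) by ring. lra. }
  simpl in F. lra.
Qed.

Ltac sbt2 := repeat match goal with
 | |- SB (fun y => Derive_n ?f ?k y) ?c ?r => apply (SB_Derive_n f c r k); assumption
 | |- SB (fun y => @?F y + @?G y) _ _ => apply (SB_plus F G)
 | |- SB (fun y => @?F y - @?G y) _ _ => apply (SB_minus F G)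
 | |- SB (fun y => @?F y * @?G y) _ _ => apply (SB_mult F G)
 | |- SB (fun _ => ?a) _ _ => apply SB_const
 end.

Definition SB3 g t r := SB (cx g) t r /\ SB (cy g) t r /\ SB (cz g) t r.

Lemma SB_smaller f c r r' : SB f c r -> r' <= r -> SB f c r'.
Proof. intros H Hr y Hy; apply H; lra. Qed.

Lemma SB3_analytic g t : curve_analytic_at g t -> exists r, 0 < r /\ SB3 g t r.
Proof.
  intros [Hx [Hy Hz]]. apply analytic_SM in Hx, Hy, Hz.
  destruct Hx as [r1 [H1 S1]], Hy as [r2 [H2 S2]], Hz as [r3 [H3 S3]].
  exists (Rmin r1 (Rmin r2 r3)). split. repeat apply Rmin_pos; auto.
  pose proof (Rmin_l r1 (Rmin r2 r3)). pose proof (Rmin_r r1 (Rmin r2 r3)).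
  pose proof (Rmin_l r2 r3). pose proof (Rmin_r r2 r3).
  repeat split; eapply SB_smaller; eauto; lra.
Qed.

Lemma SB3_shrink g c r y : SB3 g c r -> Rabs (y - c) < r -> SB3 g y (r - Rabs (y - c)).
Proof.
  intros [H1 [H2 H3]] Hy.
  assert (K : forall z, Rabs (z - y) < r - Rabs (y - c) -> Rabs (z - c) < r).
  { intros z Hz. pose proof (Rabs_triang (z - y) (y - c)). replace (z - y + (y - c)) with (z - c) in H by ring. lra. }
  repeat split; eapply SB_sub; eauto.
Qed.

Lemma ext_nbhd g L : 0 < L -> (forall t, 0 <= t <= L -> curve_analytic_at g t) ->
  exists a0 b0, a0 < 0 /\ L < b0 /\ forall t, a0 <= t <= b0 -> exists r, 0 < r /\ SB3 g t r.
Proof.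
  intros HL HA.
  destruct (SB3_analytic g 0 (HA 0 ltac:(lra))) as [r0 [Hr0 S0]].
  destruct (SB3_analytic g L (HA L ltac:(lra))) as [rL [HrL SL]].
  exists (- r0 / 2), (L + rL / 2). split; [lra|split;[lra|]].
  intros t Ht. destruct (Rlt_le_dec t 0) as [Ht0|Ht0].
  - exists (r0 - Rabs (t - 0)). rewrite Rminus_0_r, Rabs_left by lra. split; [lra|].
    replace (r0 - - t) with (r0 - Rabs (t - 0)) by (rewrite Rminus_0_r, Rabs_left by lra; ring).
    apply SB3_shrink; auto. rewrite Rminus_0_r, Rabs_left by lra. lra.
  - destruct (Rle_lt_dec t L) as [HtL|HtL].
    + apply SB3_analytic, HA; lra.
    + exists (rL - Rabs (t - L)). split. rewrite Rabs_pos_eq by lra. lra.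
      apply SB3_shrink; auto. rewrite Rabs_pos_eq by lra. lra.
Qed.

Lemma phase_eq g xi : forall y, phase g xi y = vx xi * Derive_n (cx g) 0 y + vy xi * Derive_n (cy g) 0 y + vz xi * Derive_n (cz g) 0 y.
Proof. reflexivity. Qed.

Lemma phase_SB g xi t r : SB3 g t r -> SB (phase g xi) t r.
Proof.
  intros [H1 [H2 H3]]. eapply SB_ext; [|intros y; symmetry; apply phase_eq]. sbt2.
Qed.

Lemma phase_Dn g xi t r k : 0 < r -> SB3 g t r -> Derive_n (phase g xi) k t = dot3 xi (Gv g k t).
Proof.
  intros Hr [H1 [H2 H3]]. rewrite (Derive_n_ext _ _ k t (phase_eq g xi)).
  rewrite (Dn_lin _ _ _ _ _ _ 0 k t r) by auto. rewrite Nat.add_0_r. reflexivity.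
Qed.

Lemma fun_bound (f : R -> R) L : 0 <= L -> (forall t, 0 <= t <= L -> continuous f t) ->
  exists B, 0 <= B /\ forall t, 0 <= t <= L -> Rabs (f t) <= B.
Proof.
  intros HL Hc. destruct (continuity_ab_maj (fun t => Rabs (f t)) 0 L HL) as [Mx [HM _]].
  intros; apply cpt, continuous_Rabs_comp; auto.
  exists (Rabs (f Mx)). split; auto. apply Rabs_pos.
Qed.

Lemma level_bound g L k : 0 <= L -> (forall t, 0 <= t <= L -> exists r, 0 < r /\ SB3 g t r) ->
  exists B, 0 <= B /\ forall t, 0 <= t <= L -> vbound (Gv g k t) B.
Proof.
  intros HL HS.
  destruct (fun_bound (Derive_n (cx g) k) L HL) as [B1 [P1 H1]].
  { intros t Ht. destruct (HS t Ht) as [r [Hr [S1 _]]]. apply exd_cont. apply (SB_ex _ _ r); auto. }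
  destruct (fun_bound (Derive_n (cy g) k) L HL) as [B2 [P2 H2]].
  { intros t Ht. destruct (HS t Ht) as [r [Hr [_ [S2 _]]]]. apply exd_cont. apply (SB_ex _ _ r); auto. }
  destruct (fun_bound (Derive_n (cz g) k) L HL) as [B3 [P3 H3]].
  { intros t Ht. destruct (HS t Ht) as [r [Hr [_ [_ S3]]]]. apply exd_cont. apply (SB_ex _ _ r); auto. }
  exists (Rmax B1 (Rmax B2 B3)). split. eapply Rle_trans; [apply P1|apply Rmax_l].
  intros t Ht. pose proof (Rmax_l B1 (Rmax B2 B3)). pose proof (Rmax_r B1 (Rmax B2 B3)).
  pose proof (Rmax_l B2 B3). pose proof (Rmax_r B2 B3).
  specialize (H1 t Ht). specialize (H2 t Ht). specialize (H3 t Ht).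
  unfold vbound, Gv; cbn [vx vy vz mkv3 fst snd]. repeat split; lra.
Qed.

Lemma comp_bound g L n : 0 <= L -> (forall t, 0 <= t <= L -> exists r, 0 < r /\ SB3 g t r) ->
  exists B, 0 <= B /\ forall k t, (k <= n)%nat -> 0 <= t <= L -> vbound (Gv g k t) B.
Proof.
  intros HL HS. induction n.
  - destruct (level_bound g L 0 HL HS) as [B [HB H]]. exists B. split; auto.
    intros k t Hk Ht. assert (k = 0%nat) by lia. subst. auto.
  - destruct IHn as [B [HB H]]. destruct (level_bound g L (S n) HL HS) as [B' [HB' H']].
    exists (Rmax B B'). split. eapply Rle_trans; [apply HB|apply Rmax_l].
    intros k t Hk Ht. pose proof (Rmax_l B B'). pose proof (Rmax_r B B').
    assert (V : vbound (Gv g k t) B \/ vbound (Gv g k t) B').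
    { destruct (Nat.eq_dec k (S n)). subst. right; auto. left; apply H; auto; lia. }
    unfold vbound in *. destruct V as [[? [? ?]]|[? [? ?]]]; repeat split; lra.
Qed.

Fixpoint hs (g : R -> v3) (n : nat) (t : R) : R :=
  match n with
  | O => 0
  | S n' => hs g n' t + det3 (Gv g 1 t) (Gv g 2 t) (Gv g (3 + n') t) ^ 2
  end.

Lemma hs_nonneg g n t : 0 <= hs g n t.
Proof. induction n; cbn [hs]; [lra|]. pose proof (pow2_ge_0 (det3 (Gv g 1 t) (Gv g 2 t) (Gv g (3 + n) t))). lra. Qed.

Lemma hs_ge g n t k : (k < n)%nat -> det3 (Gv g 1 t) (Gv g 2 t) (Gv g (3 + k) t) ^ 2 <= hs g n t.
Proof.
  induction n; intros Hk; [lia|]. cbn [hs].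
  destruct (Nat.eq_dec k n) as [->|Hne].
  - pose proof (hs_nonneg g n t). lra.
  - pose proof (IHn ltac:(lia)). pose proof (pow2_ge_0 (det3 (Gv g 1 t) (Gv g 2 t) (Gv g (3 + n) t))). lra.
Qed.

Lemma hs_le g n t M : (forall k, (k < n)%nat -> det3 (Gv g 1 t) (Gv g 2 t) (Gv g (3 + k) t) ^ 2 <= M) ->
  hs g n t <= INR n * M.
Proof.
  induction n; intros H. simpl; lra. rewrite S_INR. cbn [hs].
  pose proof (IHn ltac:(intros; apply H; lia)). pose proof (H n ltac:(lia)). lra.
Qed.

Lemma SB_pow2 f c r : SB f c r -> SB (fun y => f y ^ 2) c r.
Proof. intros H. eapply SB_ext; [apply (SB_mult f (fun y => f y * 1)); [auto|apply SB_mult; auto; apply SB_const]|].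
  intros; simpl; ring. Qed.

Lemma hs_SB g n t r : SB3 g t r -> SB (hs g n) t r.
Proof.
  intros [H1 [H2 H3]]. induction n.
  - eapply SB_ext. apply (SB_const 0). intros; reflexivity.
  - change (SB (fun y => hs g n y + det3 (Gv g 1 y) (Gv g 2 y) (Gv g (3 + n) y) ^ 2) t r).
    apply (SB_plus (hs g n)); auto. apply (SB_pow2 (fun y => det3 (Gv g 1 y) (Gv g 2 y) (Gv g (3 + n) y))).
    unfold det3, dot3, cross3, Gv; cbn [vx vy vz mkv3 fst snd]. sbt2.
Qed.

Lemma dot_self_nonneg u : 0 <= dot3 u u.
Proof. unfold dot3. pose proof (Rle_0_sqr (vx u)). pose proof (Rle_0_sqr (vy u)). pose proof (Rle_0_sqr (vz u)).
  unfold Rsqr in *. lra. Qed.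

Lemma unit_tangent g t : norm3 (D3 g t) = 1 -> dot3 (Gv g 1 t) (Gv g 1 t) = 1.
Proof.
  intros H. change (sqrt (dot3 (Gv g 1 t) (Gv g 1 t)) = 1) in H.
  pose proof (dot_self_nonneg (Gv g 1 t)). rewrite <- (sqrt_sqrt (dot3 (Gv g 1 t) (Gv g 1 t))) by auto.
  rewrite H. ring.
Qed.

Lemma curv_pos g t : curvature g t <> 0 -> 0 < dot3 (Gv g 2 t) (Gv g 2 t).
Proof.
  intros H. change (sqrt (dot3 (Gv g 2 t) (Gv g 2 t)) <> 0) in H.
  pose proof (dot_self_nonneg (Gv g 2 t)). destruct H0 as [H0|H0]; auto.
  rewrite <- H0, sqrt_0 in H. lra.
Qed.

Lemma dsq (a b c : R -> R) t : ex_derive a t -> ex_derive b t -> ex_derive c t ->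
  is_derive (fun y => a y * a y + b y * b y + c y * c y) t (2 * (a t * Derive a t + b t * Derive b t + c t * Derive c t)).
Proof.
  intros. auto_derive. repeat split; auto.
  change (fun x => a x) with a. change (fun x => b x) with b. change (fun x => c x) with c. ring.
Qed.

Lemma orth_t0 g L t0 r : 0 < L -> 0 <= t0 <= L -> 0 < r -> SB3 g t0 r ->
  (forall t, 0 <= t <= L -> dot3 (Gv g 1 t) (Gv g 1 t) = 1) -> dot3 (Gv g 1 t0) (Gv g 2 t0) = 0.
Proof.
  intros HL Ht0 Hr [S1 [S2 S3]] Hu.
  set (f := fun y => dot3 (Gv g 1 y) (Gv g 1 y)).
  assert (Hd : is_derive f t0 (2 * dot3 (Gv g 1 t0) (Gv g 2 t0))).
  { pose proof (SB_ex _ _ r 1 Hr S1). pose proof (SB_ex _ _ r 1 Hr S2). pose proof (SB_ex _ _ r 1 Hr S3).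
    exact (dsq (Derive_n (cx g) 1) (Derive_n (cy g) 1) (Derive_n (cz g) 1) t0 H H0 H1). }
  pose proof (deriv_zero_const f 0 L t0 _ HL Ht0 ltac:(intros s Hs; unfold f; rewrite !Hu; auto) Hd). lra.
Qed.

Lemma sq0 x : x ^ 2 <= 0 -> x = 0.
Proof. intros H. apply Rsqr_0_uniq. rewrite Rsqr_pow2. pose proof (pow2_ge_0 x). lra. Qed.

Lemma hs_pos g L t0 m t r : 0 < L -> 0 <= t <= L -> 0 < r -> SB3 g t r ->
  (forall s, 0 <= s <= L -> dot3 (Gv g 1 s) (Gv g 1 s) = 1) ->
  (forall s, 0 <= s <= L -> curvature g s <> 0) ->
  (forall s, 0 <= s <= L -> torsion g s = 0 -> s = t0) -> Derive_n (torsion g) m t0 <> 0 ->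
  0 < hs g (S m) t.
Proof.
  intros HL Ht Hr HS Hu Hc Ht0 Htau.
  pose proof (hs_nonneg g (S m) t) as Hn.
  destruct (Req_dec t t0) as [<-|Hne].
  - destruct Hn as [Hn|Hn]; auto. exfalso. destruct HS as [S1 [S2 S3]].
    apply (t0_nondeg g t m r); auto.
    + apply (orth_t0 g L t r); auto. split; auto.
    + apply curv_pos, Hc; auto.
    + intros k Hk. replace k with (3 + (k - 3))%nat by lia.
      pose proof (hs_ge g (S m) t (k - 3) ltac:(lia)).
      apply sq0. lra.
  - assert (Hq : 0 < dot3 (Gv g 2 t) (Gv g 2 t)) by (apply curv_pos, Hc; auto).
    assert (Htn : torsion g t <> 0) by (intros H; apply Hne, Ht0; auto).
    destruct HS as [S1 [S2 S3]].
    rewrite torsion_formula in Htn; auto.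
    2: { intros k Hk. repeat split; apply (SB_ex _ _ r); auto. }
    assert (Hd : det3 (Gv g 1 t) (Gv g 2 t) (Gv g 3 t) <> 0).
    { intros H. apply Htn. rewrite H. unfold Rdiv. ring. }
    pose proof (hs_ge g (S m) t 0 ltac:(lia)). simpl (3 + 0)%nat in H.
    assert (0 < det3 (Gv g 1 t) (Gv g 2 t) (Gv g 3 t) ^ 2) by (apply pow2_gt_0; auto).
    lra.
Qed.

Definition cover_prop (phi : R -> R) L K mu N :=
  forall i, (i < N)%nat -> exists k, (1 <= k)%nat /\ (k <= K)%nat /\
     ((forall t, INR i * (L / INR N) <= t <= INR (S i) * (L / INR N) -> mu <= Derive_n phi k t) \/
      (forall t, INR i * (L / INR N) <= t <= INR (S i) * (L / INR N) -> Derive_n phi k t <= - mu)).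

Lemma sqrt_dot1 u : sqrt (dot3 u u) = 1 -> dot3 u u = 1.
Proof.
  intros H. pose proof (dot_self_nonneg u). rewrite <- (sqrt_sqrt (dot3 u u)) by auto. rewrite H. ring.
Qed.

Lemma unit_comp xi : dot3 xi xi = 1 -> Rabs (vx xi) <= 1 /\ Rabs (vy xi) <= 1 /\ Rabs (vz xi) <= 1.
Proof.
  intros H. unfold dot3 in H.
  assert (A : forall a, a * a <= 1 -> Rabs a <= 1).
  { intros a Ha. assert (E : a * a = Rabs a * Rabs a) by (rewrite <- Rabs_mult, Rabs_pos_eq; [ring|nra]).
    rewrite E in Ha. pose proof (Rabs_pos a). nra. }
  pose proof (Rle_0_sqr (vx xi)). pose proof (Rle_0_sqr (vy xi)). pose proof (Rle_0_sqr (vz xi)). unfold Rsqr in *.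
  repeat split; apply A; lra.
Qed.

Lemma dot_bound xi v B : dot3 xi xi = 1 -> vbound v B -> Rabs (dot3 xi v) <= 3 * B.
Proof.
  intros H [H1 [H2 H3]]. destruct (unit_comp xi H) as [U1 [U2 U3]].
  replace (3 * B) with (3 * 1 * B) by ring. unfold dot3. apply lin3_bound; auto.
Qed.

Lemma geom L g t0 m : 0 < L ->
  (forall t, 0 <= t <= L -> curve_analytic_at g t) ->
  (forall t, 0 <= t <= L -> norm3 (D3 g t) = 1) ->
  (forall t, 0 <= t <= L -> curvature g t <> 0) ->
  0 <= t0 <= L ->
  (forall t, 0 <= t <= L -> torsion g t = 0 -> t = t0) ->
  Derive_n (torsion g) m t0 <> 0 ->
  exists a0 b0 mu B2 N, a0 < 0 /\ L < b0 /\ 0 < mu /\ 0 <= B2 /\ (1 <= N)%nat /\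
    forall xi, norm3 xi = 1 -> Reg (phase g xi) a0 b0 /\
      (forall t, 0 <= t <= L -> Rabs (Derive_n (phase g xi) 2 t) <= B2) /\
      cover_prop (phase g xi) L (m + 3) mu N.
Proof.
  intros HL HA Hal Hcu Ht0 Htz Htau.
  destruct (ext_nbhd g L HL HA) as [a0 [b0 [Ha0 [Hb0 HSe]]]].
  assert (HS : forall t, 0 <= t <= L -> exists r, 0 < r /\ SB3 g t r) by (intros; apply HSe; lra).
  destruct (comp_bound g L (m + 4) ltac:(lra) HS) as [B [HB HBd]].
  assert (Hu : forall s, 0 <= s <= L -> dot3 (Gv g 1 s) (Gv g 1 s) = 1) by (intros; apply unit_tangent, Hal; auto).
  destruct (continuity_ab_min (hs g (S m)) 0 L ltac:(lra)) as [tm [Hmin Htm]].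
  { intros c Hc. destruct (HS c Hc) as [r [Hr Sr]]. apply cpt, exd_cont.
    apply (SB_ex (hs g (S m)) c r 0 Hr (hs_SB g (S m) c r Sr)). }
  set (c0 := hs g (S m) tm).
  assert (Hc0 : 0 < c0).
  { destruct (HS tm Htm) as [r [Hr Sr]]. apply (hs_pos g L t0 m tm r); auto. }
  set (D := 216 * INR (S m) * (B ^ 4 + 1)).
  assert (HSm : 0 < INR (S m)) by (apply lt_0_INR; lia).
  assert (HB4 : 0 <= B ^ 4) by (apply pow_le; auto).
  assert (HD : 0 < D) by (unfold D; apply Rmult_lt_0_compat; [lra|lra]).
  set (nu := Rmin 1 (c0 / D)).
  assert (Hnu : 0 < nu) by (apply Rmin_pos; [lra|apply Rdiv_lt_0_compat; auto]).
  assert (Hnu1 : nu <= 1) by apply Rmin_l.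
  assert (Hnu2 : nu <= c0 / D) by apply Rmin_r.
  assert (Hsmall : INR (S m) * (108 * nu ^ 2 * B ^ 4) < c0).
  { assert (E : INR (S m) * (108 * (c0 / D) * B ^ 4) = c0 / 2 * (B ^ 4 / (B ^ 4 + 1))) by (unfold D; field; lra).
    assert (F : B ^ 4 / (B ^ 4 + 1) < 1).
    { apply (Rmult_lt_reg_r (B ^ 4 + 1)); [lra|]. unfold Rdiv. rewrite Rmult_assoc, Rinv_l by lra. lra. }
    assert (G0 : 0 <= B ^ 4 / (B ^ 4 + 1)) by (apply Rdiv_le_0_compat; lra).
    assert (nu ^ 2 <= nu) by (simpl; nra).
    assert (INR (S m) * (108 * nu ^ 2 * B ^ 4) <= INR (S m) * (108 * (c0 / D) * B ^ 4)).
    { apply Rmult_le_compat_l; [lra|]. apply Rmult_le_compat_r; [auto|]. nra. }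
    nra. }
  set (mu := nu / 2).
  set (Kb := 3 * B + 1).
  destruct (INR_unbounded (Kb * L / mu)) as [n0 Hn0].
  set (N := S n0).
  assert (HN : 0 < INR N) by (apply lt_0_INR; unfold N; lia).
  assert (HNd : Kb * (L / INR N) < mu).
  { unfold N. rewrite S_INR. assert (0 < mu) by (unfold mu; lra). assert (0 < Kb) by (unfold Kb; lra).
    apply (Rmult_lt_reg_r (INR n0 + 1)); [pose proof (pos_INR n0); lra|].
    replace (Kb * (L / (INR n0 + 1)) * (INR n0 + 1)) with (Kb * L) by (field; pose proof (pos_INR n0); lra).
    apply (Rmult_lt_reg_r (/ mu)); [apply Rinv_0_lt_compat; lra|].
    replace (mu * (INR n0 + 1) * / mu) with (INR n0 + 1) by (field; lra).
    unfold Rdiv in Hn0. lra. }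
  assert (Low : forall xi t, dot3 xi xi = 1 -> 0 <= t <= L ->
             exists k, (1 <= k <= m + 3)%nat /\ nu <= Rabs (dot3 xi (Gv g k t))).
  { intros xi t Hxi Ht. apply Classical_Prop.NNPP. intros Hno.
    assert (Hlt : forall k, (1 <= k <= m + 3)%nat -> Rabs (dot3 xi (Gv g k t)) <= nu).
    { intros k Hk. destruct (Rle_lt_dec (Rabs (dot3 xi (Gv g k t))) nu); auto. exfalso. apply Hno. exists k. split; auto. lra. }
    assert (Hh : hs g (S m) t <= INR (S m) * (108 * nu ^ 2 * B ^ 4)).
    { apply hs_le. intros k Hk. apply det_bound with xi; auto.
      - apply HBd; auto; lia.
      - apply HBd; auto; lia.
      - apply HBd; auto; lia.
      - apply Hlt; lia.
      - apply Hlt; lia.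
      - apply Hlt; lia. }
    pose proof (Hmin t Ht). fold c0 in H. lra. }
  exists a0, b0, mu, Kb, N. split; [auto|split;[auto|split;[unfold mu; lra|split;[unfold Kb; lra|split;[unfold N; lia|]]]]].
  intros xi Hxi1. assert (Hxi : dot3 xi xi = 1) by (apply sqrt_dot1; exact Hxi1).
  assert (HR : Reg (phase g xi) a0 b0).
  { intros n t Ht. destruct (HSe t Ht) as [r [Hr Sr]]. apply (SB_ex _ _ r); auto. apply phase_SB; auto. }
  assert (HDn : forall k t, (k <= m + 4)%nat -> 0 <= t <= L -> Rabs (Derive_n (phase g xi) k t) <= Kb).
  { intros k t Hk Ht. destruct (HS t Ht) as [r [Hr Sr]]. rewrite (phase_Dn g xi t r k) by auto.
    eapply Rle_trans. apply dot_bound; auto. unfold Kb; lra. }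
  split; auto. split. intros t Ht. apply HDn; auto; lia.
  intros i Hi. set (p := INR i * (L / INR N)).
  assert (HLN : 0 < L / INR N) by (apply Rdiv_lt_0_compat; lra).
  assert (Hp0 : 0 <= p) by (unfold p; apply Rmult_le_pos; [apply pos_INR|lra]).
  assert (HpL : INR (S i) * (L / INR N) <= L).
  { replace L with (INR N * (L / INR N)) at 2 by (field; lra). apply Rmult_le_compat_r; [lra|]. apply le_INR; lia. }
  assert (Hpp : INR (S i) * (L / INR N) = p + L / INR N) by (unfold p; rewrite S_INR; ring).
  destruct (Low xi p Hxi ltac:(lra)) as [k [Hk Hkv]].
  exists k. split; [lia|split;[lia|]].
  destruct (HS p ltac:(lra)) as [rp [Hrp Sp]].
  rewrite <- (phase_Dn g xi p rp k) in Hkv by auto.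
  assert (Lip : forall t, p <= t <= INR (S i) * (L / INR N) ->
     Rabs (Derive_n (phase g xi) k t - Derive_n (phase g xi) k p) <= mu).
  { intros t Ht. eapply Rle_trans. apply (lip_lem (phase g xi) k 0 L Kb p t); auto; try lra.
    - eapply Reg_sub; eauto; lra.
    - intros s Hs. apply HDn; auto; lia.
    - assert (Kb * (t - p) <= Kb * (L / INR N)) by (apply Rmult_le_compat_l; unfold Kb; lra). lra. }
  destruct (Rle_lt_dec 0 (Derive_n (phase g xi) k p)) as [Hs|Hs].
  - left. intros t Ht. rewrite Rabs_pos_eq in Hkv by auto. specialize (Lip t Ht).
    apply Rabs_le_between in Lip. unfold mu in *. lra.
  - right. intros t Ht. rewrite Rabs_left in Hkv by auto. specialize (Lip t Ht).
    apply Rabs_le_between in Lip. unfold mu in *. lra.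
Qed.

Lemma cover_shift phi L K mu N c : cover_prop phi L K mu N -> cover_prop (fun x => phi x + c) L K mu N.
Proof.
  intros H i Hi. destruct (H i Hi) as [k [Hk1 [Hk2 Hk3]]]. exists k. split; auto. split; auto.
  destruct k; [lia|]. destruct Hk3 as [Hk3|Hk3]; [left|right]; intros t Ht; rewrite Derive_n_shift; auto.
Qed.

Lemma sqrt_sum_le a b : sqrt (a ^ 2 + b ^ 2) <= Rabs a + Rabs b.
Proof.
  pose proof (Rabs_pos a). pose proof (Rabs_pos b).
  rewrite <- (sqrt_pow2 (Rabs a + Rabs b)) by lra. apply sqrt_le_1_alt.
  rewrite <- (pow2_abs a), <- (pow2_abs b). simpl. nra.
Qed.

Theorem proposition3p4 (L : R) (gamma : R -> v3) (t0 : R) (m : nat) :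
  0 < L ->
  (forall t, 0 <= t <= L -> curve_analytic_at gamma t) ->
  (forall t, 0 <= t <= L -> norm3 (D3 gamma t) = 1) ->
  (forall t, 0 <= t <= L -> curvature gamma t <> 0) ->
  non_planar gamma L ->
  0 <= t0 <= L ->
  (forall t, 0 <= t <= L -> torsion gamma t = 0 -> t = t0) ->
  (1 <= m)%nat ->
  (forall k, (k < m)%nat -> Derive_n (torsion gamma) k t0 = 0) ->
  Derive_n (torsion gamma) m t0 <> 0 ->
  exists C : R, 0 < C /\
    forall (xi : v3) (lam : R) (A : R -> R),
      norm3 xi = 1 -> 0 < lam -> smooth A ->
      osc_integral_abs gamma L A lam xi
        <= C * Rpower lam (- / INR (m + 3))
             * (sup_norm A 0 L + L1_norm_deriv A 0 L).
Proof.
  intros HL HA Hal Hcu _ Ht0 Htz _ _ Htau.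
  destruct (geom L gamma t0 m HL HA Hal Hcu Ht0 Htz Htau)
    as [a0 [b0 [mu [B2 [N [Ha0 [Hb0 [Hmu [HB2 [HN Hg]]]]]]]]]].
  set (Mc := L + INR N * Mp mu B2 L (m + 3)).
  assert (HMc : 0 < Mc).
  { unfold Mc. pose proof (Mp_pos mu B2 L (m + 3) Hmu HB2 ltac:(lra)). pose proof (pos_INR N). nra. }
  exists (2 * Mc). split; [lra|].
  intros xi lam A Hxi Hlam HAs.
  destruct (Hg xi Hxi) as [HR [HB Hcov]].
  set (X := Rpower lam (- / INR (m + 3))).
  assert (HX : 0 < X) by apply X_pos.
  set (S := sup_norm A 0 L + L1_norm_deriv A 0 L).
  assert (HS : 0 <= S) by (unfold S; pose proof (sup_norm_nonneg A L HAs ltac:(lra));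
                           pose proof (L1_nonneg A L HAs ltac:(lra)); lra).
  assert (Bre : Rabs (RInt (fun t => A t * cos (lam * phase gamma xi t)) 0 L) <= Mc * X * S).
  { apply (ampl (phase gamma xi) lam L a0 b0 A (Mc * X)); auto.
    intros x Hx. apply (cover_bound (phase gamma xi) L a0 b0 (m + 3) mu B2 N lam x); auto; try lra; lia. }
  set (c := - (PI / 2) / lam).
  assert (Bim : Rabs (RInt (fun t => A t * sin (lam * phase gamma xi t)) 0 L) <= Mc * X * S).
  { replace (RInt (fun t => A t * sin (lam * phase gamma xi t)) 0 L)
      with (RInt (fun t => A t * cos (lam * (phase gamma xi t + c))) 0 L).
    2: { apply RInt_ext. intros t _. f_equal. unfold c.
         replace (lam * (phase gamma xi t + - (PI / 2) / lam)) with (- (PI / 2 - lam * phase gamma xi t)) by (field; lra).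
         rewrite cos_neg, cos_shift. reflexivity. }
    apply (ampl (fun t => phase gamma xi t + c) lam L a0 b0 A (Mc * X)); auto.
    apply Reg_shift; auto.
    intros x Hx. apply (cover_bound (fun t => phase gamma xi t + c) L a0 b0 (m + 3) mu B2 N lam x); auto; try lra; try lia.
    - apply Reg_shift; auto.
    - intros t Ht. rewrite (Derive_n_shift _ _ 1). apply HB; auto.
    - apply cover_shift; auto. }
  unfold osc_integral_abs. eapply Rle_trans. apply sqrt_sum_le.
  fold X. replace (2 * Mc * X * S) with (Mc * X * S + Mc * X * S) by ring.
  fold S. apply Rplus_le_compat; auto.
Qed.
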